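(* Let $a>0$ and $\psi_a(x)=\operatorname{sech}(ax)=\frac{2}{e^{ax}+e^{-ax}}$. There is a constant $C>0$ (depending only on $a$) such that every $f=\sum_{k\in\mathbb{Z}}c_k\psi_a(\cdot-k)$ with $c\in\ell^\infty(\mathbb{Z})$ has an extension to a meromorphic function on $\mathbb{C}$ whose set of poles $P_f$ satisfies $P_f\subseteq P:=\mathbb{Z}+\frac{i\pi}{a}(\frac12+\mathbb{Z})$; every pole of $f$ is simple; and for all $x+iy\in\mathbb{C}\setminus P$, $$|f(x+iy)|\le C\|c\|_\infty|\psi_a(\langle x\rangle+iy)|\le C\|c\|_\infty\min\Big\{|a\langle x\rangle|^{-1},\ \big|2\langle\tfrac{ay}{\pi}-\tfrac12\rangle\big|^{-1}\Big\}.$$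
   Context: For real $x$, $\langle x\rangle:=x-l$ where $l\in\mathbb{Z}$ is chosen so that $\langle x\rangle\in[-1/2,1/2)$. Here $\psi_a(z)=\operatorname{sech}(az)$ for complex $z$ denotes the meromorphic extension. *)

(* Defs.v *)
From Stdlib Require Import Reals ZArith.
From Coquelicot Require Import Coquelicot.
Open Scope R_scope.

(* <x> := x - l, l integer, <x> in [-1/2, 1/2) *)
Definition brk (x : R) : R := x - IZR (Int_part (x + / 2)).

Definition cexp (z : C) : C :=
  (exp (fst z) * cos (snd z), exp (fst z) * sin (snd z)).

Definition psi (a : R) (z : C) : C :=
  Cdiv (RtoC 2) (Cplus (cexp (Cmult (RtoC a) z)) (cexp (Copp (Cmult (RtoC a) z)))).

Definition Zseries (u : Z -> C) : C :=
  (Series (fun n => fst (u (Z.of_nat n))) + Series (fun n => fst (u (- Z.of_nat (S n))%Z)),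
   Series (fun n => snd (u (Z.of_nat n))) + Series (fun n => snd (u (- Z.of_nat (S n))%Z))).

Definition f_of (a : R) (c : Z -> C) (x : R) : C :=
  Zseries (fun k => Cmult (c k) (psi a (RtoC (x - IZR k)))).

Definition bounded_seq (c : Z -> C) : Prop := exists M : R, forall k, Cmod (c k) <= M.
Definition linf_norm (c : Z -> C) : R :=
  real (Lub_Rbar (fun r => exists k, r = Cmod (c k))).

Definition in_P (a : R) (z : C) : Prop :=
  exists m n : Z, z = (IZR m, PI / a * (/ 2 + IZR n)).

Definition cdiff (F : C -> C) (z : C) : Prop := @ex_derive C_AbsRing C_NormedModule F z.

Definition at_most_simple_pole (F : C -> C) (p : C) : Prop :=
  exists r : R, 0 < r /\ exists g : C -> C,
    (forall w, Cmod (Cminus w p) < r -> cdiff g w) /\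
    (forall w, 0 < Cmod (Cminus w p) < r -> F w = Cdiv (g w) (Cminus w p)).

(* Main.v *)
Require Import Defs.
From Stdlib Require Import Reals ZArith Lra Psatz Lia.
From Coquelicot Require Import Coquelicot.
Open Scope R_scope.

Lemma mvt0 (f df : R -> R) (s : R) :
  (forall x, is_derive f x (df x)) ->
  exists c, Rabs c <= Rabs s /\ f s - f 0 = df c * (s - 0).
Proof.
  intros Hd.
  destruct (MVT_gen f 0 s df) as [c [Hc Heq]].
  - intros x _; apply Hd.
  - intros x _. apply derivable_continuous_pt.
    exists (df x). apply is_derive_Reals. apply Hd.
  - exists c; split; [|exact Heq].
    revert Hc. unfold Rmin, Rmax. destruct (Rle_dec 0 s); intros; unfold Rabs;
    repeat destruct Rcase_abs; lra.
Qed.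

Lemma sin_abs t : Rabs (sin t) <= Rabs t.
Proof.
  destruct (mvt0 sin cos t) as [c [_ H]].
  { intros x; auto_derive; auto; ring. }
  rewrite sin_0 in H. replace (sin t) with (cos c * t) by lra.
  rewrite Rabs_mult. pose proof (COS_bound c).
  assert (Rabs (cos c) <= 1) by (apply Rabs_le; lra).
  pose proof (Rabs_pos t). nra.
Qed.

Lemma cos1 t : Rabs (cos t - 1) <= t ^ 2.
Proof.
  destruct (mvt0 cos (fun x => - sin x) t) as [c [Hc H]].
  { intros x; auto_derive; auto; ring. }
  rewrite cos_0 in H. replace (cos t - 1) with (- sin c * t) by lra.
  rewrite Rabs_mult, Rabs_Ropp. pose proof (sin_abs c).
  pose proof (Rabs_pos t). pose proof (Rabs_pos c).
  replace (t^2) with (Rabs t * Rabs t) by (rewrite <- Rabs_mult, Rabs_right; nra).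
  nra.
Qed.

Lemma sin3 t : Rabs (sin t - t) <= Rabs t ^ 3.
Proof.
  destruct (mvt0 (fun x => sin x - x) (fun x => cos x - 1) t) as [c [Hc H]].
  { intros x; auto_derive; auto; ring. }
  rewrite sin_0 in H. replace (sin t - t) with ((cos c - 1) * t) by lra.
  rewrite Rabs_mult. pose proof (cos1 c).
  pose proof (Rabs_pos t). pose proof (Rabs_pos c).
  assert (c^2 <= Rabs t ^2). { replace (c^2) with (Rabs c ^2). nra.
    unfold Rabs; destruct Rcase_abs; ring. }
  nra.
Qed.

Lemma exp_le3 c : Rabs c <= 1 -> exp c <= 3.
Proof.
  intros H. pose proof exp_le_3. assert (c <= 1) by (apply Rabs_le_between in H; lra).
  destruct (Rle_lt_or_eq_dec _ _ H1). 
  - pose proof (exp_increasing _ _ r). lra.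
  - subst; lra.
Qed.

Lemma exp1 s : Rabs s <= 1 -> Rabs (exp s - 1) <= 3 * Rabs s.
Proof.
  intros Hs.
  destruct (mvt0 exp exp s) as [c [Hc H]].
  { intros x; auto_derive; auto; ring. }
  rewrite exp_0 in H. replace (exp s - 1) with (exp c * s) by lra.
  rewrite Rabs_mult. pose proof (exp_le3 c ltac:(lra)). pose proof (exp_pos c).
  rewrite (Rabs_right (exp c)) by lra. pose proof (Rabs_pos s). nra.
Qed.

Lemma exp2 s : Rabs s <= 1 -> Rabs (exp s - 1 - s) <= 3 * s ^ 2.
Proof.
  intros Hs.
  destruct (mvt0 (fun x => exp x - 1 - x) (fun x => exp x - 1) s) as [c [Hc H]].
  { intros x; auto_derive; auto; ring. }
  rewrite exp_0 in H. replace (exp s - 1 - s) with ((exp c - 1) * s) by lra.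
  rewrite Rabs_mult. pose proof (exp1 c ltac:(lra)).
  pose proof (Rabs_pos s). pose proof (Rabs_pos c).
  replace (s^2) with (Rabs s * Rabs s) by (rewrite <- Rabs_mult, Rabs_right; nra).
  nra.
Qed.

Lemma exp3 s : Rabs s <= 1 -> Rabs (exp s - 1 - s - s^2/2) <= 3 * Rabs s ^ 3.
Proof.
  intros Hs.
  destruct (mvt0 (fun x => exp x - 1 - x - x^2/2) (fun x => exp x - 1 - x) s) as [c [Hc H]].
  { intros x; auto_derive; auto; field. }
  rewrite exp_0 in H. replace (exp s - 1 - s - s^2/2) with ((exp c - 1 - c) * s) by lra.
  rewrite Rabs_mult. pose proof (exp2 c ltac:(lra)).
  pose proof (Rabs_pos s). pose proof (Rabs_pos c).
  assert (c^2 <= Rabs s ^2). { replace (c^2) with (Rabs c ^2). nra.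
    unfold Rabs; destruct Rcase_abs; ring. }
  nra.
Qed.

Lemma Rabs_sq x : x ^ 2 = Rabs x ^ 2.
Proof. unfold Rabs; destruct Rcase_abs; ring. Qed.

Lemma Cmod_sum_le (z : C) : Cmod z <= Rabs (fst z) + Rabs (snd z).
Proof.
  destruct z as [x y]. unfold Cmod; cbn [fst snd].
  pose proof (Rabs_pos x); pose proof (Rabs_pos y).
  rewrite <- (sqrt_pow2 (Rabs x + Rabs y)) by lra. apply sqrt_le_1_alt.
  rewrite (Rabs_sq x), (Rabs_sq y).
  replace ((Rabs x + Rabs y)^2) with (Rabs x ^2 + Rabs y ^2 + 2 * (Rabs x * Rabs y)) by ring.
  pose proof (Rmult_le_pos _ _ H H0). lra.
Qed.

Lemma Cmod_fst (z : C) : Rabs (fst z) <= Cmod z.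
Proof. pose proof (Rmax_Cmod z). pose proof (Rmax_l (Rabs (fst z)) (Rabs (snd z))). lra. Qed.
Lemma Cmod_snd (z : C) : Rabs (snd z) <= Cmod z.
Proof. pose proof (Rmax_Cmod z). pose proof (Rmax_r (Rabs (fst z)) (Rabs (snd z))). lra. Qed.

Lemma Cmod_sq (z : C) : Cmod z ^ 2 = fst z ^ 2 + snd z ^ 2.
Proof. apply Cmod2_alt. Qed.

Lemma cexp_add u v : cexp (u + v)%C = (cexp u * cexp v)%C.
Proof.
  destruct u as [u1 u2], v as [v1 v2]. unfold cexp; simpl.
  rewrite exp_plus, cos_plus, sin_plus. apply injective_projections; simpl; ring.
Qed.

Lemma Cmod_cexp u : Cmod (cexp u) = exp (fst u).
Proof.
  destruct u as [s t]; unfold Cmod, cexp; cbn [fst snd].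
  assert (Hsc : sin t ^2 + cos t ^2 = 1) by (rewrite <- (sin2_cos2 t); unfold Rsqr; ring).
  replace ((exp s * cos t) ^ 2 + (exp s * sin t) ^ 2) with (exp s ^ 2 * (sin t ^2 + cos t ^2)) by ring.
  rewrite Hsc, Rmult_1_r.
  apply sqrt_pow2. pose proof (exp_pos s); lra.
Qed.

Lemma cexp_neq0 u : cexp u <> 0%C.
Proof.
  intros H. pose proof (Cmod_cexp u). rewrite H, Cmod_0 in H0. pose proof (exp_pos (fst u)). lra.
Qed.


Lemma cE2 v : Cmod v <= 1 -> Cmod (cexp v - 1 - v)%C <= 5 * Cmod v ^ 2.
Proof.
  intros Hv. pose proof (Cmod_fst v) as Hs. pose proof (Cmod_snd v) as Ht.
  rewrite Cmod_sq. destruct v as [s t]. cbn [fst snd] in *.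
  replace (cexp (s,t) - 1 - (s,t))%C with (((exp s - 1 - s) * cos t + (1 + s) * (cos t - 1)), ((exp s - 1) * sin t + (sin t - t)))
   by (unfold cexp; apply injective_projections; simpl; ring).
  eapply Rle_trans; [apply Cmod_sum_le|]. cbn [fst snd].
  pose proof (exp2 s ltac:(lra)). pose proof (exp1 s ltac:(lra)).
  pose proof (cos1 t). pose proof (sin3 t). pose proof (sin_abs t).
  assert (Rabs (cos t) <= 1) by (apply Rabs_le; apply COS_bound).
  pose proof (Rabs_pos s); pose proof (Rabs_pos t).
  assert (Rabs (1 + s) <= 2) by (apply Rabs_le; apply Rabs_le_between in Hs; lra).
  assert (HRe : Rabs ((exp s - 1 - s) * cos t + (1 + s) * (cos t - 1)) <= 3 * s^2 + 2 * t^2).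
  { eapply Rle_trans; [apply Rabs_triang|]. rewrite !Rabs_mult.
    pose proof (Rabs_pos (cos t - 1)). pose proof (Rabs_pos (exp s - 1 - s)).
    pose proof (Rabs_pos (1+s)). pose proof (Rabs_pos (cos t)). nra. }
  assert (HIm : Rabs ((exp s - 1) * sin t + (sin t - t)) <= 3 * Rabs s * Rabs t + t^2).
  { eapply Rle_trans; [apply Rabs_triang|]. rewrite !Rabs_mult.
    pose proof (Rabs_pos (exp s - 1)). pose proof (Rabs_pos (sin t)).
    assert (Rabs t ^ 3 <= t^2) by (rewrite (Rabs_sq t); nra). nra. }
  assert (2 * (Rabs s * Rabs t) <= Rabs s ^2 + Rabs t^2).
  { pose proof (pow2_ge_0 (Rabs s - Rabs t)) as Hq. ring_simplify in Hq. lra. }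
  rewrite (Rabs_sq s), (Rabs_sq t) in *. clear -HRe HIm H8. nra.
Qed.
Lemma QR_derive (F : C -> C) z L r M : 0 < r ->
  (forall h : C, Cmod h < r -> Cmod (F (z + h) - F z - L * h)%C <= M * Cmod h ^ 2) ->
  @is_derive C_AbsRing C_NormedModule F z L.
Proof.
  intros Hr HQ. split.
  - apply is_linear_scal_l.
  - intros x Hx. apply (@is_filter_lim_locally_unique C_AbsRing (AbsRing_NormedModule C_AbsRing)) in Hx. subst x.
    intros eps.
    assert (Hd : 0 < Rmin r (eps / (Rabs M + 1))).
    { apply Rmin_pos; auto. apply Rdiv_lt_0_compat. apply cond_pos. pose proof (Rabs_pos M); lra. }
    exists (mkposreal _ Hd). intros y Hy. simpl in Hy. change C in y.
    change (Cmod (F y - F z - (y - z) * L)%C <= eps * Cmod (y - z)%C).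
    assert (Hh : Cmod (y - z)%C < Rmin r (eps / (Rabs M + 1))) by exact Hy.
    pose proof (Rmin_l r (eps / (Rabs M + 1))). pose proof (Rmin_r r (eps / (Rabs M + 1))).
    assert (Hyz : y = (z + (y - z))%C) by ring.
    pose proof (HQ (y - z)%C ltac:(lra)) as HH. rewrite <- Hyz in HH.
    replace ((y - z) * L)%C with (L * (y - z))%C by ring.
    eapply Rle_trans; [exact HH|].
    pose proof (Cmod_ge_0 (y - z)%C). pose proof (Rabs_pos M). pose proof (Rle_abs M).
    assert (Cmod (y - z)%C * (Rabs M + 1) <= eps).
    { apply (Rmult_le_reg_r (/ (Rabs M + 1))). apply Rinv_0_lt_compat; lra.
      rewrite Rmult_assoc, Rinv_r by lra. unfold Rdiv in *. lra. }
    nra.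
Qed.

Lemma Rabs_minus_tri x y : Rabs (x - y) <= Rabs x + Rabs y.
Proof. unfold Rminus. eapply Rle_trans; [apply Rabs_triang|]. rewrite Rabs_Ropp; lra. Qed.

Lemma cS3 v : Cmod v <= 1 -> Cmod (cexp v - cexp (- v) - 2 * v)%C <= 20 * Cmod v ^ 3.
Proof.
  intros Hv. pose proof (Cmod_fst v) as Hs. pose proof (Cmod_snd v) as Ht.
  pose proof (Cmod_ge_0 v) as H0.
  destruct v as [s t]. cbn [fst snd] in *. set (m := Cmod (s,t)) in *.
  replace (cexp (s,t) - cexp (-(s,t)) - 2 * (s,t))%C with
   (((exp s - 1 - s - s^2/2) - (exp (-s) - 1 - (-s) - (-s)^2/2)) * cos t + 2 * s * (cos t - 1),
    ((exp s - 1 - s) + (exp (-s) - 1 - (-s))) * sin t + 2 * (sin t - t))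
   by (unfold cexp; apply injective_projections; simpl; rewrite ?cos_neg, ?sin_neg; field).
  eapply Rle_trans; [apply Cmod_sum_le|]. cbn [fst snd].
  pose proof (exp3 s ltac:(lra)). pose proof (exp3 (-s) ltac:(rewrite Rabs_Ropp; lra)).
  pose proof (exp2 s ltac:(lra)). pose proof (exp2 (-s) ltac:(rewrite Rabs_Ropp; lra)).
  rewrite Rabs_Ropp in *.
  pose proof (cos1 t). pose proof (sin3 t). pose proof (sin_abs t).
  assert (Rabs (cos t) <= 1) by (apply Rabs_le; apply COS_bound).
  pose proof (Rabs_pos s); pose proof (Rabs_pos t).
  assert (HRe : Rabs (((exp s - 1 - s - s^2/2) - (exp (-s) - 1 - (-s) - (-s)^2/2)) * cos t + 2 * s * (cos t - 1))
     <= 6 * Rabs s ^ 3 + 2 * Rabs s * Rabs t ^ 2).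
  { eapply Rle_trans; [apply Rabs_triang|]. rewrite !Rabs_mult.
    pose proof (Rabs_minus_tri (exp s - 1 - s - s^2/2) (exp (-s) - 1 - (-s) - (-s)^2/2)).
    rewrite (Rabs_right 2) by lra.
    pose proof (Rabs_pos (cos t - 1)). pose proof (Rabs_pos (cos t)).
    pose proof (Rabs_pos ((exp s - 1 - s - s ^ 2 / 2) - (exp (- s) - 1 - - s - (- s) ^ 2 / 2))).
    rewrite (Rabs_sq t) in H4.
    assert (Rabs (exp s - 1 - s - s ^ 2 / 2 - (exp (- s) - 1 - - s - (- s) ^ 2 / 2)) * Rabs (cos t) <=
      Rabs (exp s - 1 - s - s ^ 2 / 2 - (exp (- s) - 1 - - s - (- s) ^ 2 / 2))) by nra.
    assert (Rabs s * Rabs (cos t - 1) <= Rabs s * Rabs t ^ 2) by (apply Rmult_le_compat_l; lra).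
    lra. }
  assert (HIm : Rabs (((exp s - 1 - s) + (exp (-s) - 1 - (-s))) * sin t + 2 * (sin t - t))
     <= 6 * Rabs s ^ 2 * Rabs t + 2 * Rabs t ^ 3).
  { eapply Rle_trans; [apply Rabs_triang|]. rewrite !Rabs_mult.
    pose proof (Rabs_triang (exp s - 1 - s) (exp (-s) - 1 - (-s))).
    rewrite (Rabs_right 2) by lra. rewrite (Rabs_sq (-s)), Rabs_Ropp in H3. rewrite (Rabs_sq s) in H2.
    pose proof (Rabs_pos (sin t)). pose proof (Rabs_pos (exp s - 1 - s + (exp (- s) - 1 - - s))).
    assert (Rabs (exp s - 1 - s + (exp (- s) - 1 - - s)) * Rabs (sin t) <= (6 * Rabs s ^ 2) * Rabs t)
      by (apply Rmult_le_compat; lra).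
    lra. }
  assert (Hm3 : forall x y, 0 <= x -> 0 <= y -> x <= m -> y <= m -> x^2 * y <= m^3 /\ x * y^2 <= m^3 /\ x^3 <= m^3).
  { intros x y Hx Hy Hxm Hym.
    assert (E1 : x*x <= m*m) by (apply Rmult_le_compat; lra).
    assert (E2 : x*y <= m*m) by (apply Rmult_le_compat; lra).
    assert (E3 : x*x*y <= m*m*m) by (apply Rmult_le_compat; try lra; apply Rmult_le_pos; lra).
    assert (E4 : x*y*y <= m*m*m) by (apply Rmult_le_compat; try lra; apply Rmult_le_pos; lra).
    assert (E5 : x*x*x <= m*m*m) by (apply Rmult_le_compat; try lra; apply Rmult_le_pos; lra).
    replace (x^2*y) with (x*x*y) by ring. replace (x*y^2) with (x*y*y) by ring.
    replace (x^3) with (x*x*x) by ring. replace (m^3) with (m*m*m) by ring. auto. }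
  destruct (Hm3 (Rabs s) (Rabs t)) as [A1 [A2 A3]]; auto.
  destruct (Hm3 (Rabs t) (Rabs s)) as [B1 [B2 B3]]; auto.
  replace (6 * Rabs s ^ 2 * Rabs t) with (6 * (Rabs s ^ 2 * Rabs t)) in HIm by ring.
  replace (2 * Rabs s * Rabs t ^ 2) with (2 * (Rabs s * Rabs t ^ 2)) in HRe by ring.
  pose proof (pow_le m 3 H0). lra.
Qed.

Definition Dd (a : R) (u : C) : C := (cexp (RtoC a * u) + cexp (- (RtoC a * u)))%C.
Definition Dp (a : R) (u : C) : C := (RtoC a * (cexp (RtoC a * u) - cexp (- (RtoC a * u))))%C.
Definition dpsi (a : R) (u : C) : C := (- (2 * Dp a u) / (Dd a u * Dd a u))%C.

Lemma psi_Dd a u : psi a u = (2 / Dd a u)%C.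
Proof. reflexivity. Qed.

Lemma ra_mul a u : (RtoC a * u)%C = (a * fst u, a * snd u).
Proof. destruct u; apply injective_projections; simpl; ring. Qed.

Lemma Cmod_ra a h : 0 <= a -> Cmod (RtoC a * h)%C = a * Cmod h.
Proof. intros. rewrite Cmod_mult, Cmod_R, Rabs_pos_eq; auto. Qed.

Lemma Dd_comp a s t : Dd a (s,t) =
  ((exp (a*s) + exp (-(a*s))) * cos (a*t), (exp (a*s) - exp (-(a*s))) * sin (a*t)).
Proof.
  unfold Dd. rewrite ra_mul. unfold cexp. cbn [fst snd Copp Cplus].
  apply injective_projections; simpl; rewrite ?cos_neg, ?sin_neg; ring.
Qed.

Lemma exp_mul_neg x : exp x * exp (- x) = 1.
Proof. rewrite <- exp_plus. replace (x + - x) with 0 by ring. apply exp_0. Qed.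

Lemma Dd_mod_sq a s t :
  Cmod (Dd a (s,t)) ^ 2 = (exp (a*s) - exp (-(a*s))) ^ 2 + 4 * cos (a*t) ^ 2.
Proof.
  rewrite Cmod_sq, Dd_comp. cbn [fst snd].
  assert (Hsc : sin (a*t) ^2 + cos (a*t) ^2 = 1) by (rewrite <- (sin2_cos2 (a*t)); unfold Rsqr; ring).
  pose proof (exp_mul_neg (a*s)) as HX.
  set (X := exp (a*s)) in *. set (Y := exp (-(a*s))) in *.
  set (c := cos (a*t)) in *. set (sn := sin (a*t)) in *.
  replace (((X + Y) * c) ^ 2) with ((X - Y)^2 * c^2 + 4 * (X * Y) * c^2) by ring.
  rewrite HX.
  replace ((X - Y) ^ 2 * c ^ 2 + 4 * 1 * c ^ 2 + ((X - Y) * sn) ^ 2) with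
    ((X - Y)^2 * (sn^2 + c^2) + 4 * c^2) by ring.
  rewrite Hsc. ring.
Qed.

Lemma sqrt_sq_le x y : 0 <= y -> x ^ 2 <= y ^ 2 -> Rabs x <= y.
Proof.
  intros Hy H. rewrite <- (sqrt_pow2 y Hy). rewrite <- sqrt_Rsqr_abs.
  apply sqrt_le_1_alt. unfold Rsqr. lra.
Qed.

Lemma Dd_lb1 a s t : Rabs (exp (a*s) - exp (-(a*s))) <= Cmod (Dd a (s,t)).
Proof.
  apply sqrt_sq_le. apply Cmod_ge_0. rewrite Dd_mod_sq.
  pose proof (pow2_ge_0 (cos (a*t))). lra.
Qed.

Lemma Dd_lb2 a s t : 2 * Rabs (cos (a*t)) <= Cmod (Dd a (s,t)).
Proof.
  replace (2 * Rabs (cos (a*t))) with (Rabs (2 * cos (a * t))).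
  2: { rewrite Rabs_mult, Rabs_right by lra. ring. }
  apply sqrt_sq_le. apply Cmod_ge_0. rewrite Dd_mod_sq.
  pose proof (pow2_ge_0 (exp (a*s) - exp (-(a*s)))). lra.
Qed.

Lemma Dd_ub a u : Cmod (Dd a u) <= exp (a * fst u) + exp (- (a * fst u)).
Proof.
  unfold Dd. eapply Rle_trans; [apply Cmod_triangle|].
  rewrite !Cmod_cexp, ra_mul. unfold Copp; cbn [fst snd]. lra.
Qed.

Lemma exp_le_exp x y : x <= y -> exp x <= exp y.
Proof. intros [H|H]. left; apply exp_increasing; auto. subst; lra. Qed.

Lemma sinh_abs x : Rabs (exp x - exp (- x)) = exp (Rabs x) - exp (- Rabs x).
Proof.
  unfold Rabs at 2 3. destruct (Rcase_abs x).
  - rewrite Rabs_left1. rewrite Ropp_involutive. ring.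
    assert (exp x <= exp (-x)) by (apply exp_le_exp; lra). lra.
  - rewrite Rabs_right. ring.
    assert (exp (-x) <= exp x) by (apply exp_le_exp; lra). lra.
Qed.

Lemma exp_sum_le x : exp x + exp (- x) <= 2 * exp (Rabs x).
Proof.
  assert (exp x <= exp (Rabs x)) by (apply exp_le_exp; apply Rle_abs).
  assert (exp (-x) <= exp (Rabs x)) by (apply exp_le_exp; rewrite <- Rabs_Ropp; apply Rle_abs).
  lra.
Qed.

Lemma Dd_lb_far a s t : 0 < a -> / 2 <= Rabs s ->
  exp (a * Rabs s) * (1 - exp (- a)) <= Cmod (Dd a (s,t)).
Proof.
  intros Ha Hs. eapply Rle_trans; [|apply Dd_lb1]. rewrite sinh_abs.
  rewrite Rabs_mult, (Rabs_pos_eq a) by lra.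
  assert (exp (- (a * Rabs s)) <= exp (a * Rabs s) * exp (- a)).
  { rewrite <- exp_plus. apply exp_le_exp. nra. }
  lra.
Qed.

Lemma Dd_taylor a u h :
  (Dd a (u + h) - Dd a u - Dp a u * h)%C =
  (cexp (RtoC a * u) * (cexp (RtoC a * h) - 1 - RtoC a * h)
   + cexp (- (RtoC a * u)) * (cexp (- (RtoC a * h)) - 1 - (- (RtoC a * h))))%C.
Proof.
  unfold Dd, Dp.
  replace (RtoC a * (u + h))%C with (RtoC a * u + RtoC a * h)%C by ring.
  replace (- (RtoC a * u + RtoC a * h))%C with (- (RtoC a * u) + - (RtoC a * h))%C by ring.
  rewrite !cexp_add. ring.
Qed.

Lemma Dd_rem a u h : 0 < a -> a * Cmod h <= 1 ->
  Cmod (Dd a (u + h) - Dd a u - Dp a u * h)%C <=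
  (exp (a * fst u) + exp (- (a * fst u))) * (5 * (a * Cmod h) ^ 2).
Proof.
  intros Ha Hh. rewrite Dd_taylor.
  eapply Rle_trans; [apply Cmod_triangle|]. rewrite !Cmod_mult, !Cmod_cexp.
  rewrite ra_mul. cbn [fst snd].
  pose proof (cE2 (RtoC a * h)%C) as E1. rewrite Cmod_ra in E1 by lra.
  pose proof (cE2 (- (RtoC a * h))%C) as E2. rewrite Cmod_opp, Cmod_ra in E2 by lra.
  specialize (E1 Hh). specialize (E2 Hh).
  pose proof (exp_pos (a * fst u)). pose proof (exp_pos (- (a * fst u))).
  change (fst (- ((a*fst u)%R, (a*snd u)%R))%C) with (- (a * fst u)).
  rewrite Rmult_plus_distr_r.
  apply Rplus_le_compat; apply Rmult_le_compat_l; lra.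
Qed.

Lemma Dp_bound a u : 0 < a -> Cmod (Dp a u) <= a * (exp (a * fst u) + exp (- (a * fst u))).
Proof.
  intros Ha. unfold Dp. rewrite Cmod_ra by lra. apply Rmult_le_compat_l; [lra|].
  unfold Cminus. eapply Rle_trans; [apply Cmod_triangle|]. rewrite Cmod_opp, !Cmod_cexp.
  rewrite ra_mul. change (fst (- ((a*fst u)%R, (a*snd u)%R))%C) with (- (a * fst u)). cbn [fst snd]. lra.
Qed.

Lemma div_le x y z : 0 < y -> x <= z * y -> x / y <= z.
Proof.
  intros Hy H. apply (Rmult_le_reg_r y); auto. unfold Rdiv.
  rewrite Rmult_assoc, Rinv_l by lra. lra.
Qed.

Lemma inv_rem_eq (Dz Dw L h : C) : Dz <> 0%C -> Dw <> 0%C ->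
  (2 / Dw - 2 / Dz - (- (2 * L) / (Dz * Dz)) * h)%C =
  (2 * ((- Dz * (Dw - Dz - L * h) + L * h * (Dw - Dz)) / (Dw * (Dz * Dz))))%C.
Proof. intros. field. auto. Qed.

Lemma Cmod_neq0 z : 0 < Cmod z -> z <> 0%C.
Proof. intros H E. rewrite E, Cmod_0 in H. lra. Qed.

Lemma exp_abs_inv x : exp x * exp (- x) = 1.
Proof. apply exp_mul_neg. Qed.

Lemma psi_QR a m0 u h : 0 < a -> 0 < m0 ->
  m0 * exp (a * Rabs (fst u)) <= Cmod (Dd a u) ->
  Cmod h < Rmin (/ a) (m0 / (24 * a)) ->
  Cmod (psi a (u + h) - psi a u - dpsi a u * h)%C
    <= 176 * a ^ 2 / m0 ^ 3 * exp (- (a * Rabs (fst u))) * Cmod h ^ 2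
  /\ m0 * exp (a * Rabs (fst u)) / 2 <= Cmod (Dd a (u + h)).
Proof.
  intros Ha Hm Hlb Hh.
  pose proof (Rmin_l (/ a) (m0 / (24 * a))) as Hr1.
  pose proof (Rmin_r (/ a) (m0 / (24 * a))) as Hr2.
  set (s := fst u) in *.
  set (Q := exp (a * Rabs s)) in *. set (IQ := exp (- (a * Rabs s))) in *.
  assert (HQ : Q * IQ = 1) by apply exp_abs_inv.
  assert (HQp : 0 < Q) by apply exp_pos. assert (HIQp : 0 < IQ) by apply exp_pos.
  set (nh := Cmod h) in *. assert (Hnh : 0 <= nh) by apply Cmod_ge_0.
  assert (Hah : a * nh <= 1).
  { apply (Rmult_le_reg_r (/ a)). apply Rinv_0_lt_compat; lra.
    replace (a * nh * / a) with nh by (field; lra). lra. }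
  assert (Hah2 : 24 * a * nh <= m0).
  { assert (nh <= m0 / (24 * a)) by lra.
    apply (Rmult_le_compat_l (24 * a)) in H; [|lra].
    replace (24 * a * (m0 / (24 * a))) with m0 in H by (field; lra). lra. }
  assert (F1 : exp (a * s) + exp (- (a * s)) <= 2 * Q).
  { unfold Q. replace (a * Rabs s) with (Rabs (a*s)) by (rewrite Rabs_mult, (Rabs_pos_eq a); lra). apply exp_sum_le. }
  set (Dz := Dd a u). set (Dw := Dd a (u + h)). set (L := Dp a u).
  set (rho := (Dw - Dz - L * h)%C).
  assert (F2 : Cmod rho <= 10 * a ^ 2 * Q * nh ^ 2).
  { eapply Rle_trans. apply Dd_rem; auto. fold s.
    pose proof (exp_pos (a*s)). pose proof (exp_pos (-(a*s))).
    replace (10 * a ^ 2 * Q * nh ^ 2) with ((2 * Q) * (5 * (a * nh) ^ 2)) by ring.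
    apply Rmult_le_compat_r; [|lra]. pose proof (pow2_ge_0 (a * nh)). lra. }
  assert (F3 : Cmod L <= 2 * a * Q).
  { eapply Rle_trans. apply Dp_bound; auto. fold s. nra. }
  assert (F4 : Cmod (Dw - Dz)%C <= 12 * a * Q * nh).
  { replace (Dw - Dz)%C with (L * h + rho)%C by (unfold rho; ring).
    eapply Rle_trans; [apply Cmod_triangle|]. rewrite Cmod_mult. fold nh.
    assert (Cmod L * nh <= 2 * a * Q * nh) by (apply Rmult_le_compat_r; lra).
    assert (10 * a ^ 2 * Q * nh ^ 2 <= 10 * a * Q * nh).
    { replace (10 * a ^ 2 * Q * nh ^ 2) with ((10 * a * Q * nh) * (a * nh)) by ring.
      assert (0 <= 10 * a * Q * nh) by (repeat apply Rmult_le_pos; lra). nra. }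
    lra. }
  assert (F5 : Cmod Dz <= 2 * Q).
  { eapply Rle_trans. apply Dd_ub. fold s. exact F1. }
  assert (F6 : m0 * Q / 2 <= Cmod Dw).
  { assert (Cmod Dz <= Cmod Dw + Cmod (Dw - Dz)%C).
    { replace Dz with (Dw - (Dw - Dz))%C at 1 by ring. unfold Cminus at 1.
      eapply Rle_trans; [apply Cmod_triangle|]. rewrite Cmod_opp. lra. }
    assert (12 * a * Q * nh <= m0 * Q / 2) by (assert (0 <= (m0 - 24*a*nh)*Q) by (apply Rmult_le_pos; lra); lra). fold Dz in Hlb. lra. }
  split; [|exact F6].
  assert (HDz : 0 < Cmod Dz) by (fold Dz in Hlb; nra).
  assert (HDw : 0 < Cmod Dw) by nra.
  rewrite !psi_Dd. fold Dz Dw. unfold dpsi. fold Dz L.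
  rewrite inv_rem_eq by (apply Cmod_neq0; auto).
  rewrite Cmod_mult, Cmod_div by (apply Cmod_neq0; rewrite !Cmod_mult; repeat apply Rmult_lt_0_compat; auto).
  rewrite !Cmod_mult. rewrite Cmod_R, Rabs_right by lra. fold rho.
  assert (HN : Cmod (- Dz * rho + L * h * (Dw - Dz))%C <= 44 * a ^ 2 * Q ^ 2 * nh ^ 2).
  { eapply Rle_trans; [apply Cmod_triangle|]. rewrite !Cmod_mult, Cmod_opp. fold nh.
    assert (Cmod Dz * Cmod rho <= 2 * Q * (10 * a ^ 2 * Q * nh ^ 2))
      by (apply Rmult_le_compat; auto using Cmod_ge_0).
    assert (Cmod L * nh * Cmod (Dw - Dz)%C <= 2 * a * Q * nh * (12 * a * Q * nh)).
    { apply Rmult_le_compat; auto using Cmod_ge_0.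
      apply Rmult_le_pos; auto using Cmod_ge_0. apply Rmult_le_compat_r; auto. }
    nra. }
  set (N := Cmod (- Dz * rho + L * h * (Dw - Dz))%C) in *.
  assert (HNp : 0 <= N) by apply Cmod_ge_0.
  replace (2 * (N / (Cmod Dw * (Cmod Dz * Cmod Dz)))) with ((2 * N) / (Cmod Dw * (Cmod Dz * Cmod Dz))) by (field; lra).
  apply div_le. repeat apply Rmult_lt_0_compat; auto.
  assert (Hden : m0 * Q / 2 * (m0 * Q * (m0 * Q)) <= Cmod Dw * (Cmod Dz * Cmod Dz)).
  { fold Dz in Hlb. apply Rmult_le_compat; try nra. apply Rmult_le_compat; nra. }
  assert (HK : 0 <= 176 * a ^ 2 / m0 ^ 3 * IQ * nh ^ 2).
  { assert (0 < / m0 ^ 3) by (apply Rinv_0_lt_compat, pow_lt; lra).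
    pose proof (pow2_ge_0 a). pose proof (pow2_ge_0 nh). unfold Rdiv.
    repeat apply Rmult_le_pos; lra. }
  eapply Rle_trans; [|apply Rmult_le_compat_l; [exact HK|exact Hden]].
  replace (176 * a ^ 2 / m0 ^ 3 * IQ * nh ^ 2 * (m0 * Q / 2 * (m0 * Q * (m0 * Q))))
    with (88 * a ^ 2 * nh ^ 2 * Q ^ 2 * (Q * IQ)) by (field; lra).
  rewrite HQ. lra.
Qed.

Lemma dpsi_bound a m0 u : 0 < a -> 0 < m0 ->
  m0 * exp (a * Rabs (fst u)) <= Cmod (Dd a u) ->
  Cmod (dpsi a u) <= 4 * a / m0 ^ 2 * exp (- (a * Rabs (fst u))).
Proof.
  intros Ha Hm Hlb.
  set (s := fst u) in *.
  set (Q := exp (a * Rabs s)) in *. set (IQ := exp (- (a * Rabs s))) in *.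
  assert (HQ : Q * IQ = 1) by apply exp_abs_inv.
  assert (HQp : 0 < Q) by apply exp_pos. assert (HIQp : 0 < IQ) by apply exp_pos.
  assert (F1 : exp (a * s) + exp (- (a * s)) <= 2 * Q).
  { unfold Q. replace (a * Rabs s) with (Rabs (a*s)) by (rewrite Rabs_mult, (Rabs_pos_eq a); lra). apply exp_sum_le. }
  assert (F3 : Cmod (Dp a u) <= 2 * a * Q).
  { eapply Rle_trans. apply Dp_bound; auto. fold s. nra. }
  assert (HDz : 0 < Cmod (Dd a u)) by nra.
  unfold dpsi. rewrite Cmod_div by (apply Cmod_neq0; rewrite Cmod_mult; nra).
  rewrite Cmod_opp, !Cmod_mult, Cmod_R, Rabs_right by lra.
  apply div_le. nra.
  assert (Hden : m0 * Q * (m0 * Q) <= Cmod (Dd a u) * Cmod (Dd a u)) by (apply Rmult_le_compat; nra).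
  assert (HK : 0 <= 4 * a / m0 ^ 2 * IQ).
  { repeat apply Rmult_le_pos; try lra. left; apply Rinv_0_lt_compat, pow_lt; lra. }
  eapply Rle_trans; [|apply Rmult_le_compat_l; [exact HK|exact Hden]].
  replace (4 * a / m0 ^ 2 * IQ * (m0 * Q * (m0 * Q))) with (4 * a * Q * (Q * IQ)) by (field; lra).
  rewrite HQ. lra.
Qed.

Lemma Series_le_bound (a : nat -> R) B : ex_series a -> (forall N, sum_f_R0 a N <= B) -> Series a <= B.
Proof.
  intros [l Hl] HN. rewrite (is_series_unique a l Hl).
  assert (H : is_lim_seq (sum_n a) l) by exact Hl.
  assert (H2 : is_lim_seq (fun _ : nat => B) B) by apply is_lim_seq_const.
  pose proof (is_lim_seq_le (sum_n a) (fun _ => B) l B) as H3. simpl in H3. apply H3; auto.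
  intros n. rewrite sum_n_Reals. auto.
Qed.

Lemma ex_series_Rle (a b : nat -> R) : (forall n, Rabs (a n) <= b n) -> ex_series b -> ex_series a.
Proof. intros H Hb. apply (ex_series_le a b); auto. Qed.

Lemma Series_lin (a b c d : nat -> R) x y :
  ex_series a -> ex_series b -> ex_series c -> ex_series d ->
  Series (fun n => a n - b n - (c n * x - d n * y)) = Series a - Series b - (Series c * x - Series d * y).
Proof.
  intros [la Ha] [lb Hb] [lc Hc] [ld Hd].
  rewrite (is_series_unique a la Ha), (is_series_unique b lb Hb), (is_series_unique c lc Hc), (is_series_unique d ld Hd).
  apply is_series_unique.
  pose proof (is_series_scal_r x c lc Hc) as Hc'. pose proof (is_series_scal_r y d ld Hd) as Hd'.
  pose proof (is_series_minus _ _ _ _ Hc' Hd') as H1.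
  pose proof (is_series_minus _ _ _ _ Ha Hb) as H2.
  pose proof (is_series_minus _ _ _ _ H2 H1) as H3.
  exact H3.
Qed.

Lemma Series_lin2 (c d : nat -> R) x y :
  ex_series c -> ex_series d ->
  Series (fun n => x * c n - y * d n) = x * Series c - y * Series d.
Proof.
  intros [lc Hc] [ld Hd].
  rewrite (is_series_unique c lc Hc), (is_series_unique d ld Hd).
  apply is_series_unique.
  pose proof (is_series_scal_l x c lc Hc) as Hc'. pose proof (is_series_scal_l y d ld Hd) as Hd'.
  exact (is_series_minus _ _ _ _ Hc' Hd').
Qed.

Definition posp (u : Z -> R) : nat -> R := fun n => u (Z.of_nat n).
Definition negp (u : Z -> R) : nat -> R := fun n => u (- Z.of_nat (S n))%Z.

Definition ZS (b : Z -> R) : Prop := ex_series (posp b) /\ ex_series (negp b).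
Definition ZsumR (b : Z -> R) : R := Series (posp b) + Series (negp b).

Definition Zconv (u : Z -> C) : Prop :=
  ZS (fun k => fst (u k)) /\ ZS (fun k => snd (u k)).

Lemma Zseries_eq (u : Z -> C) :
  Zseries u = (ZsumR (fun k => fst (u k)), ZsumR (fun k => snd (u k))).
Proof. reflexivity. Qed.

Lemma Series_abs_le (a b : nat -> R) : (forall n, Rabs (a n) <= b n) -> ex_series b ->
  Rabs (Series a) <= Series b.
Proof.
  intros H Hb.
  assert (Hab : ex_series (fun n => Rabs (a n))).
  { apply (ex_series_Rle _ b); auto. intros n. rewrite Rabs_Rabsolu. auto. }
  eapply Rle_trans. apply Series_Rabs; auto.
  apply Series_le; auto. intros n; split; auto. apply Rabs_pos.
Qed.

Lemma Zbound (u : Z -> C) (b : Z -> R) :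
  (forall k, Cmod (u k) <= b k) -> ZS b ->
  Zconv u /\ Cmod (Zseries u) <= 2 * ZsumR b.
Proof.
  intros H [Hp Hn].
  assert (Hf : forall k, Rabs (fst (u k)) <= b k) by (intros k; eapply Rle_trans; [apply Cmod_fst|auto]).
  assert (Hs : forall k, Rabs (snd (u k)) <= b k) by (intros k; eapply Rle_trans; [apply Cmod_snd|auto]).
  split. { refine (conj (conj _ _) (conj _ _)).
    - apply (ex_series_Rle _ (posp b)); auto. intros n; apply Hf.
    - apply (ex_series_Rle _ (negp b)); auto. intros n; apply Hf.
    - apply (ex_series_Rle _ (posp b)); auto. intros n; apply Hs.
    - apply (ex_series_Rle _ (negp b)); auto. intros n; apply Hs. }
  rewrite Zseries_eq. eapply Rle_trans; [apply Cmod_sum_le|]. cbn [fst snd].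
  unfold ZsumR.
  pose proof (Series_abs_le (posp (fun k => fst (u k))) (posp b) ltac:(intros; apply Hf) Hp).
  pose proof (Series_abs_le (negp (fun k => fst (u k))) (negp b) ltac:(intros; apply Hf) Hn).
  pose proof (Series_abs_le (posp (fun k => snd (u k))) (posp b) ltac:(intros; apply Hs) Hp).
  pose proof (Series_abs_le (negp (fun k => snd (u k))) (negp b) ltac:(intros; apply Hs) Hn).
  pose proof (Rabs_triang (Series (posp (fun k => fst (u k)))) (Series (negp (fun k => fst (u k))))).
  pose proof (Rabs_triang (Series (posp (fun k => snd (u k)))) (Series (negp (fun k => snd (u k))))).
  lra.
Qed.

Lemma ZS_scal (b : Z -> R) c : ZS b -> ZS (fun k => b k * c) /\ ZsumR (fun k => b k * c) = ZsumR b * c.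
Proof.
  intros [Hp Hn]. split.
  - destruct Hp as [l1 H1], Hn as [l2 H2]. split.
    + exists (l1 * c). exact (is_series_scal_r c _ l1 H1).
    + exists (l2 * c). exact (is_series_scal_r c _ l2 H2).
  - unfold ZsumR. rewrite Rmult_plus_distr_r, <- !Series_scal_r. reflexivity.
Qed.

Lemma Zseries_ext (u v : Z -> C) : (forall k, u k = v k) -> Zseries u = Zseries v.
Proof.
  intros H. unfold Zseries. f_equal; f_equal; apply Series_ext; intros n; rewrite H; auto.
Qed.

Lemma Zseries_lin3 (A B D : Z -> C) (h : C) : Zconv A -> Zconv B -> Zconv D ->
  Zseries (fun k => A k - B k - D k * h)%C = (Zseries A - Zseries B - Zseries D * h)%C.
Proof.
  intros [[A1 A2] [A3 A4]] [[B1 B2] [B3 B4]] [[D1 D2] [D3 D4]].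
  destruct h as [x y].
  rewrite !Zseries_eq. unfold ZsumR.
  assert (E1 : Series (posp (fun k => fst (A k - B k - D k * (x,y))%C)) =
     Series (fun n => posp (fun k => fst (A k)) n - posp (fun k => fst (B k)) n -
       (posp (fun k => fst (D k)) n * x - posp (fun k => snd (D k)) n * y)))
    by (apply Series_ext; intros; unfold posp; simpl; ring).
  assert (E2 : Series (negp (fun k => fst (A k - B k - D k * (x,y))%C)) =
     Series (fun n => negp (fun k => fst (A k)) n - negp (fun k => fst (B k)) n -
       (negp (fun k => fst (D k)) n * x - negp (fun k => snd (D k)) n * y)))
    by (apply Series_ext; intros; unfold negp; simpl; ring).
  assert (E3 : Series (posp (fun k => snd (A k - B k - D k * (x,y))%C)) =
     Series (fun n => posp (fun k => snd (A k)) n - posp (fun k => snd (B k)) n -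
       (posp (fun k => fst (D k)) n * y - posp (fun k => snd (D k)) n * (-x))))
    by (apply Series_ext; intros; unfold posp; simpl; ring).
  assert (E4 : Series (negp (fun k => snd (A k - B k - D k * (x,y))%C)) =
     Series (fun n => negp (fun k => snd (A k)) n - negp (fun k => snd (B k)) n -
       (negp (fun k => fst (D k)) n * y - negp (fun k => snd (D k)) n * (-x))))
    by (apply Series_ext; intros; unfold negp; simpl; ring).
  rewrite E1, E2, E3, E4. rewrite !Series_lin by auto.
  apply injective_projections; simpl; ring.
Qed.

Lemma Zseries_scal (A : Z -> C) (z : C) : Zconv A ->
  Zseries (fun k => z * A k)%C = (z * Zseries A)%C.
Proof.
  intros [[A1 A2] [A3 A4]]. destruct z as [x y].
  rewrite !Zseries_eq. unfold ZsumR.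
  assert (E1 : Series (posp (fun k => fst ((x,y) * A k)%C)) =
     Series (fun n => x * posp (fun k => fst (A k)) n - y * posp (fun k => snd (A k)) n))
    by (apply Series_ext; intros; unfold posp; simpl; ring).
  assert (E2 : Series (negp (fun k => fst ((x,y) * A k)%C)) =
     Series (fun n => x * negp (fun k => fst (A k)) n - y * negp (fun k => snd (A k)) n))
    by (apply Series_ext; intros; unfold negp; simpl; ring).
  assert (E3 : Series (posp (fun k => snd ((x,y) * A k)%C)) =
     Series (fun n => x * posp (fun k => snd (A k)) n - (-y) * posp (fun k => fst (A k)) n))
    by (apply Series_ext; intros; unfold posp; simpl; ring).
  assert (E4 : Series (negp (fun k => snd ((x,y) * A k)%C)) =
     Series (fun n => x * negp (fun k => snd (A k)) n - (-y) * negp (fun k => fst (A k)) n))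
    by (apply Series_ext; intros; unfold negp; simpl; ring).
  rewrite E1, E2, E3, E4. rewrite !Series_lin2 by auto.
  apply injective_projections; simpl; ring.
Qed.

Lemma SQR (u : Z -> C -> C) (d : Z -> C) (z : C) (r : R) (M : Z -> R) :
  ZS M -> (forall h, Cmod h < r -> Zconv (fun k => u k (z + h)%C)) ->
  Zconv (fun k => u k z) -> Zconv d ->
  (forall k h, Cmod h < r -> Cmod (u k (z+h) - u k z - d k * h)%C <= M k * Cmod h ^ 2) ->
  forall h, Cmod h < r ->
  Cmod (Zseries (fun k => u k (z+h)%C) - Zseries (fun k => u k z) - Zseries d * h)%C
    <= 2 * ZsumR M * Cmod h ^ 2.
Proof.
  intros HM Hw Hz Hd HQ h Hh.
  rewrite <- Zseries_lin3 by auto.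
  destruct (ZS_scal M (Cmod h ^ 2) HM) as [HM2 HS].
  destruct (Zbound (fun k => u k (z + h) - u k z - d k * h)%C (fun k => M k * Cmod h ^ 2)) as [_ Hb]; auto.
  rewrite HS in Hb. lra.
Qed.

Definition sg (a v : R) : R := / (1 + exp (- (a * v))).

Lemma sg_bounds a v : 0 < sg a v < 1.
Proof.
  unfold sg. pose proof (exp_pos (-(a*v))). split.
  - apply Rinv_0_lt_compat; lra.
  - rewrite <- Rinv_1. apply Rinv_lt_contravar; lra.
Qed.

Lemma le_div x y z : 0 < y -> x * y <= z -> x <= z / y.
Proof.
  intros Hy H. apply (Rmult_le_reg_r y); auto. unfold Rdiv.
  rewrite Rmult_assoc, Rinv_l by lra. lra.
Qed.

Lemma sg_step a v : 0 < a ->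
  exp (- (a * Rabs v)) <= 4 / (1 - exp (- a)) * (sg a (v + 1) - sg a v).
Proof.
  intros Ha. unfold sg.
  set (E := exp (- (a * v))). set (q := exp (- a)).
  assert (HE : 0 < E) by apply exp_pos.
  assert (Hq : 0 < q < 1).
  { split. apply exp_pos. unfold q. rewrite <- exp_0. apply exp_increasing. lra. }
  assert (Hv1 : exp (- (a * (v + 1))) = E * q).
  { unfold E, q. rewrite <- exp_plus. f_equal. ring. }
  rewrite Hv1.
  replace (/ (1 + E * q) - / (1 + E)) with (E * (1 - q) / ((1 + E) * (1 + E * q))) by (field; nra).
  replace (4 / (1 - q) * (E * (1 - q) / ((1 + E) * (1 + E * q)))) with (4 * E / ((1 + E) * (1 + E * q))) by (field; nra).
  destruct (Rle_dec 0 v).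
  - rewrite Rabs_right by lra. fold E.
    assert (E <= 1). { unfold E. rewrite <- exp_0. apply exp_le_exp. nra. }
    apply le_div. nra. assert (E*q <= 1) by nra. assert ((1+E)*(1+E*q) <= 4) by nra. nra.
  - rewrite Rabs_left by lra.
    assert (Hinv : exp (- (a * - v)) = / E).
    { unfold E. rewrite <- exp_Ropp. f_equal. ring. }
    rewrite Hinv.
    assert (1 <= E). { unfold E. rewrite <- exp_0. apply exp_le_exp. nra. }
    apply le_div. nra.
    apply (Rmult_le_reg_l E). lra.
    replace (E * (/ E * ((1 + E) * (1 + E * q)))) with ((1 + E) * (1 + E * q)) by (field; lra).
    nra.
Qed.

Lemma telescope (f : nat -> R) N : sum_f_R0 (fun n => f (S n) - f n) N = f (S N) - f 0%nat.
Proof. induction N; simpl; [ring|]. rewrite IHN. ring. Qed.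

Lemma sum_scal_l (f : nat -> R) c N : sum_f_R0 (fun n => c * f n) N = c * sum_f_R0 f N.
Proof. induction N; simpl; [ring|]. rewrite IHN. ring. Qed.

Lemma exp_pow_nat a n : exp (- a) ^ n = exp (- (a * INR n)).
Proof.
  induction n. simpl. rewrite Rmult_0_r, Ropp_0, exp_0. auto.
  rewrite <- tech_pow_Rmult, IHn, <- exp_plus. f_equal. rewrite S_INR. ring.
Qed.

Lemma geom_ex a c : 0 < a -> ex_series (fun n => c * exp (- (a * INR n))).
Proof.
  intros Ha. assert (Hq : Rabs (exp (- a)) < 1).
  { rewrite Rabs_right by (left; apply exp_pos). rewrite <- exp_0. apply exp_increasing. lra. }
  destruct (ex_series_geom _ Hq) as [l Hl].
  exists (l * c). apply (is_series_ext (fun n => exp (-a) ^ n * c)).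
  - intros n. rewrite exp_pow_nat. apply Rmult_comm.
  - apply is_series_scal_r. auto.
Qed.

Definition ek (a x : R) (k : Z) : R := exp (- (a * Rabs (x - IZR k))).

Lemma ek_pos a x k : 0 < ek a x k.
Proof. apply exp_pos. Qed.

Lemma ek_ZS a x : 0 < a -> ZS (ek a x) /\ ZsumR (ek a x) <= 4 / (1 - exp (- a)).
Proof.
  intros Ha.
  assert (Hq : 0 < exp (- a) < 1).
  { split. apply exp_pos. rewrite <- exp_0. apply exp_increasing. lra. }
  assert (HK : 0 < 4 / (1 - exp (- a))) by (apply Rdiv_lt_0_compat; lra).
  assert (Hp : ex_series (posp (ek a x))).
  { apply (ex_series_Rle _ (fun n => exp (a * x) * exp (- (a * INR n)))); [|apply geom_ex; auto].
    intros n. unfold posp, ek. rewrite Rabs_right by (left; apply exp_pos).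
    rewrite <- exp_plus. apply exp_le_exp. rewrite <- INR_IZR_INZ.
    pose proof (Rle_abs (INR n - x)). rewrite Rabs_minus_sym in H. nra. }
  assert (Hn : ex_series (negp (ek a x))).
  { apply (ex_series_Rle _ (fun n => exp (- (a * (1 + x))) * exp (- (a * INR n)))); [|apply geom_ex; auto].
    intros n. unfold negp, ek. rewrite Rabs_right by (left; apply exp_pos).
    rewrite <- exp_plus. apply exp_le_exp. rewrite opp_IZR, <- INR_IZR_INZ, S_INR.
    pose proof (Rle_abs (x - - (INR n + 1))). nra. }
  split; [split; auto|].
  unfold ZsumR.
  assert (S1 : Series (posp (ek a x)) <= 4 / (1 - exp (- a)) * (1 - sg a (- x))).
  { apply Series_le_bound; auto. intros N.
    eapply Rle_trans.
    - apply (sum_Rle _ (fun n => 4 / (1 - exp (- a)) * (sg a (INR (S n) - x) - sg a (INR n - x)))).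
      intros n _. unfold posp, ek. rewrite <- INR_IZR_INZ, Rabs_minus_sym.
      rewrite S_INR. replace (INR n + 1 - x) with ((INR n - x) + 1) by ring. apply sg_step; auto.
    - rewrite sum_scal_l. rewrite (telescope (fun n => sg a (INR n - x))).
      apply Rmult_le_compat_l; [lra|]. change (INR 0) with 0. replace (0 - x) with (- x) by ring.
      pose proof (sg_bounds a (INR (S N) - x)). lra. }
  assert (S2 : Series (negp (ek a x)) <= 4 / (1 - exp (- a)) * sg a (- x)).
  { apply Series_le_bound; auto. intros N.
    eapply Rle_trans.
    - apply (sum_Rle _ (fun n => 4 / (1 - exp (- a)) * ((- sg a (- INR (S n) - x)) - (- sg a (- INR n - x))))).
      intros n _. unfold negp, ek. rewrite opp_IZR, <- INR_IZR_INZ.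
      assert (E : - INR (S n) - x + 1 = - INR n - x) by (rewrite S_INR; ring).
      replace (- sg a (- INR (S n) - x) - - sg a (- INR n - x)) with
        (sg a (- INR (S n) - x + 1) - sg a (- INR (S n) - x)) by (rewrite E; ring).
      replace (Rabs (x - - INR (S n))) with (Rabs (- INR (S n) - x)) by (rewrite <- Rabs_Ropp; f_equal; ring).
      apply sg_step; auto.
    - rewrite sum_scal_l. rewrite (telescope (fun n => - sg a (- INR n - x))).
      apply Rmult_le_compat_l; [lra|]. change (INR 0) with 0. replace (- 0 - x) with (- x) by ring.
      pose proof (sg_bounds a (- INR (S N) - x)). lra. }
  nra.
Qed.

Lemma brk_range x : - / 2 <= brk x < / 2.
Proof.
  unfold brk. destruct (base_Int_part (x + / 2)). lra.
Qed.

Lemma int_unique (m k : Z) (r : R) : IZR m <= r < IZR m + 1 -> IZR k <= r < IZR k + 1 -> m = k.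
Proof.
  intros H1 H2.
  assert (m < k + 1)%Z by (apply lt_IZR; rewrite plus_IZR; simpl; lra).
  assert (k < m + 1)%Z by (apply lt_IZR; rewrite plus_IZR; simpl; lra).
  lia.
Qed.

Lemma near_k x k : Rabs (x - IZR k) < / 2 -> x - IZR k = brk x.
Proof.
  intros H. apply Rabs_def2 in H. unfold brk.
  destruct (base_Int_part (x + / 2)) as [B1 B2].
  assert (k = Int_part (x + / 2)).
  { apply (int_unique k (Int_part (x + /2)) (x + / 2)); lra. }
  subst; auto.
Qed.

Lemma psi_zero a u : Dd a u = 0%C -> psi a u = 0%C.
Proof.
  intros H. rewrite psi_Dd, H. unfold Cdiv, Cinv. simpl.
  apply injective_projections; simpl; unfold Rdiv; rewrite ?Rmult_0_l, ?Ropp_0, ?Rmult_0_l; ring.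
Qed.

Lemma psi_mod a u : 0 < Cmod (Dd a u) -> Cmod (psi a u) = 2 / Cmod (Dd a u).
Proof.
  intros H. rewrite psi_Dd, Cmod_div. rewrite Cmod_R, Rabs_right by lra. auto.
  apply Cmod_neq0; auto.
Qed.

Lemma psi_far a s t : 0 < a -> / 2 <= Rabs s ->
  Cmod (psi a (s,t)) <= 2 / (1 - exp (- a)) * exp (- (a * Rabs s)).
Proof.
  intros Ha Hs.
  assert (Hq : 0 < exp (- a) < 1).
  { split. apply exp_pos. rewrite <- exp_0. apply exp_increasing. lra. }
  pose proof (Dd_lb_far a s t Ha Hs).
  assert (0 < exp (a * Rabs s) * (1 - exp (- a))) by (apply Rmult_lt_0_compat; [apply exp_pos|lra]).
  rewrite psi_mod by lra. apply div_le. lra.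
  pose proof (exp_abs_inv (a * Rabs s)).
  assert (2 <= 2 / (1 - exp (- a)) * exp (- (a * Rabs s)) * (exp (a * Rabs s) * (1 - exp (- a)))).
  { replace (2 / (1 - exp (- a)) * exp (- (a * Rabs s)) * (exp (a * Rabs s) * (1 - exp (- a))))
      with (2 * (exp (a * Rabs s) * exp (- (a * Rabs s)))) by (field; lra). rewrite H1. lra. }
  assert (0 <= 2 / (1 - exp (- a)) * exp (- (a * Rabs s))).
  { apply Rmult_le_pos. apply Rlt_le, Rdiv_lt_0_compat; lra. left; apply exp_pos. }
  nra.
Qed.

Lemma psi_lb a b t : 0 < a -> Dd a (b,t) <> 0%C -> Rabs b <= / 2 ->
  exp (- (a / 2)) <= Cmod (psi a (b,t)).
Proof.
  intros Ha HD Hb.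
  assert (HD' : 0 < Cmod (Dd a (b,t))) by (apply (proj1 (Cmod_gt_0 _)); auto).
  rewrite psi_mod by auto.
  pose proof (Dd_ub a (b,t)). cbn [fst] in H.
  pose proof (exp_sum_le (a * b)).
  assert (exp (Rabs (a * b)) <= exp (a / 2)).
  { apply exp_le_exp. rewrite Rabs_mult, (Rabs_pos_eq a) by lra. nra. }
  apply le_div. auto.
  pose proof (exp_abs_inv (a / 2)).
  pose proof (exp_pos (- (a / 2))). 
  assert (Cmod (Dd a (b,t)) <= 2 * exp (a / 2)) by lra.
  assert (exp (- (a / 2)) * Cmod (Dd a (b,t)) <= exp (- (a / 2)) * (2 * exp (a / 2))) by (apply Rmult_le_compat_l; lra).
  nra.
Qed.

Lemma Lpsi a s t k : 0 < a ->
  Cmod (psi a (s - IZR k, t)) <=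
  (2 / (1 - exp (- a)) + exp (a / 2) * Cmod (psi a (brk s, t))) * ek a s k.
Proof.
  intros Ha. unfold ek.
  assert (Hq : 0 < exp (- a) < 1).
  { split. apply exp_pos. rewrite <- exp_0. apply exp_increasing. lra. }
  assert (H2 : 0 <= 2 / (1 - exp (- a))) by (apply Rlt_le, Rdiv_lt_0_compat; lra).
  pose proof (exp_pos (a / 2)). pose proof (exp_pos (- (a * Rabs (s - IZR k)))).
  pose proof (Cmod_ge_0 (psi a (brk s, t))).
  destruct (Rlt_le_dec (Rabs (s - IZR k)) (/ 2)).
  - replace (psi a (s - IZR k, t)) with (psi a (brk s, t)) by (rewrite (near_k s k r); auto).
    assert (1 <= exp (a / 2) * exp (- (a * Rabs (s - IZR k)))).
    { rewrite <- exp_plus, <- exp_0. apply exp_le_exp. nra. }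
    rewrite Rmult_plus_distr_r.
    assert (0 <= 2 / (1 - exp (- a)) * exp (- (a * Rabs (s - IZR k)))) by (apply Rmult_le_pos; lra).
    assert (Cmod (psi a (brk s, t)) * 1 <= Cmod (psi a (brk s, t)) * (exp (a / 2) * exp (- (a * Rabs (s - IZR k)))))
      by (apply Rmult_le_compat_l; lra).
    replace (exp (a / 2) * Cmod (psi a (brk s, t)) * exp (- (a * Rabs (s - IZR k)))) with
      (Cmod (psi a (brk s, t)) * (exp (a / 2) * exp (- (a * Rabs (s - IZR k))))) by ring.
    lra.
  - eapply Rle_trans. apply psi_far; auto.
    rewrite Rmult_plus_distr_r. pose proof (Rmult_le_pos _ _ (Rmult_le_pos _ _ (Rlt_le _ _ H) H1) (Rlt_le _ _ H0)).
    lra.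
Qed.

Definition hasQR (F : C -> C) (z L : C) : Prop :=
  exists r, 0 < r /\ exists M, forall h, Cmod h < r -> Cmod (F (z + h) - F z - L * h)%C <= M * Cmod h ^ 2.

Lemma hasQR_derive F z L : hasQR F z L -> @ex_derive C_AbsRing C_NormedModule F z.
Proof. intros [r [Hr [M HM]]]. exists L. eapply QR_derive; eauto. Qed.

Definition uk (a : R) (c : Z -> C) (k : Z) (w : C) : C := (c k * psi a ((fst w - IZR k)%R, snd w))%C.
Definition Fz (a : R) (c : Z -> C) (w : C) : C := Zseries (fun k => uk a c k w).
Definition Bw (a : R) (w : C) : R := 2 / (1 - exp (- a)) + exp (a / 2) * Cmod (psi a (brk (fst w), snd w)).

Lemma q_bounds a : 0 < a -> 0 < exp (- a) < 1.
Proof. intros. split. apply exp_pos. rewrite <- exp_0. apply exp_increasing. lra. Qed.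

Lemma Bw_pos a w : 0 < a -> 0 < Bw a w.
Proof.
  intros Ha. unfold Bw. pose proof (q_bounds a Ha).
  assert (0 < 2 / (1 - exp (- a))) by (apply Rdiv_lt_0_compat; lra).
  pose proof (exp_pos (a/2)). pose proof (Cmod_ge_0 (psi a (brk (fst w), snd w))). nra.
Qed.

Lemma uk_bound a c N k w : 0 < a -> (forall k, Cmod (c k) <= N) ->
  Cmod (uk a c k w) <= ek a (fst w) k * (N * Bw a w).
Proof.
  intros Ha Hc. unfold uk. rewrite Cmod_mult.
  pose proof (Lpsi a (fst w) (snd w) k Ha). fold (Bw a w) in H.
  pose proof (Cmod_ge_0 (c k)). pose proof (Cmod_ge_0 (psi a (fst w - IZR k, snd w))).
  pose proof (Hc k). pose proof (ek_pos a (fst w) k). pose proof (Bw_pos a w Ha).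
  replace (ek a (fst w) k * (N * Bw a w)) with (N * (Bw a w * ek a (fst w) k)) by ring.
  apply Rmult_le_compat; auto.
Qed.

Lemma ZS_ek_scal a x C0 : 0 < a -> ZS (fun k => ek a x k * C0) /\ ZsumR (fun k => ek a x k * C0) = ZsumR (ek a x) * C0.
Proof. intros Ha. apply ZS_scal. apply ek_ZS; auto. Qed.

Lemma F_conv a c N w : 0 < a -> (forall k, Cmod (c k) <= N) ->
  Zconv (fun k => uk a c k w) /\ Cmod (Fz a c w) <= 2 * (N * Bw a w) * (4 / (1 - exp (- a))).
Proof.
  intros Ha Hc.
  destruct (ZS_ek_scal a (fst w) (N * Bw a w) Ha) as [HZ HS].
  destruct (Zbound (fun k => uk a c k w) _ (fun k => uk_bound a c N k w Ha Hc) HZ) as [Hcv Hb].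
  split; auto. unfold Fz. rewrite HS in Hb.
  destruct (ek_ZS a (fst w) Ha) as [_ Hs].
  assert (0 <= N) by (pose proof (Hc 0%Z); pose proof (Cmod_ge_0 (c 0%Z)); lra).
  pose proof (Bw_pos a w Ha).
  assert (0 <= N * Bw a w) by nra. nra.
Qed.

Lemma shift_eq (z h : C) k : (fst (z + h)%C - IZR k, snd (z + h)%C) = (((fst z - IZR k)%R, snd z) + h)%C.
Proof. destruct z, h; apply injective_projections; simpl; ring. Qed.

Lemma Dd_zero_P a x y : 0 < a -> Dd a (brk x, y) = 0%C -> in_P a (x, y).
Proof.
  intros Ha HD.
  pose proof (Dd_lb1 a (brk x) y) as H1. pose proof (Dd_lb2 a (brk x) y) as H2.
  rewrite HD, Cmod_0 in H1, H2.
  assert (Hc : cos (a * y) = 0) by (pose proof (Rabs_pos (cos (a*y))); apply Rabs_eq_0; lra).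
  assert (Hb : brk x = 0).
  { rewrite sinh_abs in H1. pose proof (Rabs_pos (exp (Rabs (a * brk x)) - exp (- Rabs (a * brk x)))).
    destruct (Req_dec (Rabs (a * brk x)) 0) as [E|E].
    - apply Rabs_eq_0 in E. destruct (Rmult_integral _ _ E); lra.
    - pose proof (Rabs_pos (a * brk x)).
      assert (exp (- Rabs (a * brk x)) < exp (Rabs (a * brk x))) by (apply exp_increasing; lra).
      lra. }
  destruct (cos_eq_0_0 _ Hc) as [n Hn].
  exists (Int_part (x + / 2)), n. unfold brk in Hb.
  apply injective_projections; simpl; [lra|].
  assert (PI > 0) by apply PI_RGT_0.
  apply (Rmult_eq_reg_l a); [|lra]. rewrite Hn. field. lra.
Qed.

Lemma m0_bound a x y k : 0 < a ->
  Rmin (1 - exp (- a)) (Cmod (Dd a (brk x, y)) * exp (- (a / 2))) * exp (a * Rabs (fst (x - IZR k, y)))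
    <= Cmod (Dd a (fst (x - IZR k, y), snd (x - IZR k, y))).
Proof.
  intros Ha. cbn [fst snd].
  pose proof (Rmin_l (1 - exp (- a)) (Cmod (Dd a (brk x, y)) * exp (- (a / 2)))).
  pose proof (Rmin_r (1 - exp (- a)) (Cmod (Dd a (brk x, y)) * exp (- (a / 2)))).
  set (m0 := Rmin (1 - exp (- a)) (Cmod (Dd a (brk x, y)) * exp (- (a / 2)))) in *.
  pose proof (exp_pos (a * Rabs (x - IZR k))).
  destruct (Rlt_le_dec (Rabs (x - IZR k)) (/ 2)).
  - pose proof (near_k x k r) as E. rewrite E in *.
    assert (exp (- (a / 2)) * exp (a * Rabs (brk x)) <= 1).
    { rewrite <- exp_plus, <- exp_0. apply exp_le_exp. nra. }
    pose proof (Cmod_ge_0 (Dd a (brk x, y))).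
    assert (m0 * exp (a * Rabs (brk x)) <= Cmod (Dd a (brk x, y)) * exp (- (a / 2)) * exp (a * Rabs (brk x)))
      by (apply Rmult_le_compat_r; lra).
    nra.
  - pose proof (Dd_lb_far a (x - IZR k) y Ha r).
    assert (m0 * exp (a * Rabs (x - IZR k)) <= (1 - exp (-a)) * exp (a * Rabs (x - IZR k)))
      by (apply Rmult_le_compat_r; lra).
    lra.
Qed.

Lemma N_nonneg (c : Z -> C) N : (forall k, Cmod (c k) <= N) -> 0 <= N.
Proof. intros Hc. pose proof (Hc 0%Z); pose proof (Cmod_ge_0 (c 0%Z)); lra. Qed.

Lemma F_hasQR a c N z : 0 < a -> (forall k, Cmod (c k) <= N) -> ~ in_P a z ->
  hasQR (Fz a c) z (Zseries (fun k => c k * dpsi a ((fst z - IZR k)%R, snd z))%C).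
Proof.
  intros Ha Hc HP. destruct z as [x y].
  pose proof (N_nonneg c N Hc) as HN.
  assert (HD : 0 < Cmod (Dd a (brk x, y))).
  { apply Cmod_gt_0. intros E. apply HP. apply Dd_zero_P; auto. }
  pose proof (q_bounds a Ha) as Hq.
  set (m0 := Rmin (1 - exp (- a)) (Cmod (Dd a (brk x, y)) * exp (- (a / 2)))).
  assert (Hm0 : 0 < m0).
  { apply Rmin_pos. lra. apply Rmult_lt_0_compat; auto. apply exp_pos. }
  assert (Hmb : forall k, m0 * exp (a * Rabs (fst ((x - IZR k)%R, y))) <= Cmod (Dd a ((x - IZR k)%R, y))).
  { intros k. apply (m0_bound a x y k Ha). }
  set (r := Rmin (/ a) (m0 / (24 * a))).
  assert (Hr : 0 < r).
  { apply Rmin_pos. apply Rinv_0_lt_compat; auto. apply Rdiv_lt_0_compat; lra. }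
  set (K1 := N * (176 * a ^ 2 / m0 ^ 3)).
  set (K2 := N * (4 * a / m0 ^ 2)).
  exists r. split; auto. exists (2 * ZsumR (fun k => ek a x k * K1)).
  intros h Hh. unfold Fz.
  apply (SQR (uk a c) (fun k => c k * dpsi a ((fst (x,y) - IZR k)%R, snd (x,y)))%C (x,y) r (fun k => ek a x k * K1)); auto.
  - apply ZS_ek_scal; auto.
  - intros h' _. apply (F_conv a c N); auto.
  - apply (F_conv a c N); auto.
  - destruct (ZS_ek_scal a x K2 Ha) as [HZ _].
    refine (proj1 (Zbound _ (fun k => ek a x k * K2) _ HZ)). intros k. cbn [fst snd]. rewrite Cmod_mult.
    pose proof (dpsi_bound a m0 ((x - IZR k)%R, y) Ha Hm0 (Hmb k)). cbn [fst] in H.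
    unfold K2, ek. pose proof (Hc k). pose proof (Cmod_ge_0 (c k)). pose proof (Cmod_ge_0 (dpsi a ((x - IZR k)%R, y))).
    replace (exp (- (a * Rabs (x - IZR k))) * (N * (4 * a / m0 ^ 2))) with (N * (4 * a / m0 ^ 2 * exp (- (a * Rabs (x - IZR k))))) by ring.
    apply Rmult_le_compat; auto.
  - intros k h' Hh'. unfold uk. rewrite shift_eq. cbn [fst snd].
    replace (c k * psi a (((x - IZR k)%R, y) + h') - c k * psi a ((x - IZR k)%R, y) -
      c k * dpsi a ((x - IZR k)%R, y) * h')%C with
      (c k * (psi a (((x - IZR k)%R, y) + h') - psi a ((x - IZR k)%R, y) - dpsi a ((x - IZR k)%R, y) * h'))%C by ring.
    rewrite Cmod_mult.
    destruct (psi_QR a m0 ((x - IZR k)%R, y) h' Ha Hm0 (Hmb k) Hh') as [HQ _]. cbn [fst] in HQ.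
    unfold K1, ek. pose proof (Hc k). pose proof (Cmod_ge_0 (c k)).
    pose proof (Cmod_ge_0 (psi a (((x - IZR k)%R, y) + h') - psi a ((x - IZR k)%R, y) - dpsi a ((x - IZR k)%R, y) * h')%C).
    replace (exp (- (a * Rabs (x - IZR k))) * (N * (176 * a ^ 2 / m0 ^ 3)) * Cmod h' ^ 2) with
      (N * (176 * a ^ 2 / m0 ^ 3 * exp (- (a * Rabs (x - IZR k))) * Cmod h' ^ 2)) by ring.
    apply Rmult_le_compat; auto.
Qed.

Lemma int_sep (m k : Z) : m <> k -> 1 <= Rabs (IZR m - IZR k).
Proof.
  intros H. destruct (Z.lt_ge_cases m k).
  - assert (m + 1 <= k)%Z by lia. apply IZR_le in H1. rewrite plus_IZR in H1.
    rewrite Rabs_left1; lra.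
  - assert (k + 1 <= m)%Z by lia. apply IZR_le in H1. rewrite plus_IZR in H1.
    rewrite Rabs_right; lra.
Qed.

Lemma int_close (m k : Z) : Rabs (IZR m - IZR k) < 1 -> m = k.
Proof.
  intros H. destruct (Z.eq_dec m k); auto. pose proof (int_sep m k n). lra.
Qed.

Lemma P_sep a w p : 0 < a -> in_P a w -> in_P a p ->
  Cmod (w - p)%C < / 2 -> Cmod (w - p)%C < PI / (2 * a) -> w = p.
Proof.
  intros Ha [m1 [n1 E1]] [m2 [n2 E2]] H1 H2.
  pose proof (Cmod_fst (w - p)%C) as F1. pose proof (Cmod_snd (w - p)%C) as F2.
  subst w p. simpl in F1, F2.
  assert (m1 = m2) by (apply int_close; unfold Rminus; lra). subst.
  assert (PI > 0) by apply PI_RGT_0.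
  replace (PI / a * (/ 2 + IZR n1) + - (PI / a * (/ 2 + IZR n2))) with (PI / a * (IZR n1 - IZR n2)) in F2 by (field; lra).
  rewrite Rabs_mult, (Rabs_right (PI / a)) in F2 by (left; apply Rdiv_lt_0_compat; lra).
  assert (Rabs (IZR n1 - IZR n2) < 1).
  { assert (PI / a * Rabs (IZR n1 - IZR n2) < PI / a * 1).
    { replace (PI / a * 1) with (2 * (PI / (2 * a))) by (field; lra). assert (0 < PI / (2 * a)) by (apply Rdiv_lt_0_compat; lra). lra. }
    apply Rmult_lt_reg_l in H0; auto. apply Rdiv_lt_0_compat; lra. }
  apply int_close in H0. subst. auto.
Qed.

Lemma QR_prod (F G : C -> C) (w p L : C) (r M rho : R) :
  0 < r -> 0 < rho ->
  (forall h, Cmod h < r -> Cmod (F (w + h) - F w - L * h)%C <= M * Cmod h ^ 2) ->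
  (forall h, Cmod h < rho -> G (w + h)%C = ((w + h - p) * F (w + h))%C) ->
  G w = ((w - p) * F w)%C ->
  hasQR G w (F w + (w - p) * L)%C.
Proof.
  intros Hr Hrho HF HG Hw.
  exists (Rmin r rho). split. apply Rmin_pos; auto.
  exists (Cmod L + Rabs M * r + Cmod (w - p)%C * Rabs M).
  intros h Hh. pose proof (Rmin_l r rho). pose proof (Rmin_r r rho).
  rewrite HG by lra. rewrite Hw.
  replace ((w + h - p) * F (w + h) - (w - p) * F w - (F w + (w - p) * L) * h)%C with
    (h * (F (w + h) - F w) + (w - p) * (F (w + h) - F w - L * h))%C by ring.
  specialize (HF h ltac:(lra)).
  pose proof (Cmod_ge_0 h). pose proof (Cmod_ge_0 (w - p)%C). pose proof (Rle_abs M).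
  pose proof (Cmod_ge_0 (F (w + h) - F w - L * h)%C).
  assert (E1 : Cmod (F (w + h) - F w)%C <= Cmod L * Cmod h + Rabs M * Cmod h ^ 2).
  { replace (F (w + h) - F w)%C with (L * h + (F (w + h) - F w - L * h))%C by ring.
    eapply Rle_trans; [apply Cmod_triangle|]. rewrite Cmod_mult.
    assert (M * Cmod h ^ 2 <= Rabs M * Cmod h ^ 2) by (apply Rmult_le_compat_r; [apply pow2_ge_0|lra]).
    lra. }
  eapply Rle_trans; [apply Cmod_triangle|]. rewrite !Cmod_mult.
  assert (Cmod h * Cmod (F (w + h) - F w)%C <= Cmod h * (Cmod L * Cmod h + Rabs M * Cmod h ^ 2))
    by (apply Rmult_le_compat_l; auto).
  assert (Cmod (w - p)%C * Cmod (F (w + h) - F w - L * h)%C <= Cmod (w - p)%C * (Rabs M * Cmod h ^ 2)).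
  { apply Rmult_le_compat_l; auto. eapply Rle_trans; [exact HF|].
    apply Rmult_le_compat_r; [apply pow2_ge_0|lra]. }
  assert (Rabs M * Cmod h ^ 3 <= Rabs M * r * Cmod h ^ 2).
  { replace (Rabs M * Cmod h ^ 3) with (Rabs M * Cmod h ^ 2 * Cmod h) by ring.
    replace (Rabs M * r * Cmod h ^ 2) with (Rabs M * Cmod h ^ 2 * r) by ring.
    apply Rmult_le_compat_l. apply Rmult_le_pos. apply Rabs_pos. apply pow2_ge_0. lra. }
  replace ((Cmod L + Rabs M * r + Cmod (w - p)%C * Rabs M) * Cmod h ^ 2) with
    (Cmod h * (Cmod L * Cmod h) + Rabs M * r * Cmod h ^ 2 + Cmod (w - p)%C * (Rabs M * Cmod h ^ 2)) by ring.
  replace (Cmod h * (Cmod L * Cmod h + Rabs M * Cmod h ^ 2)) with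
    (Cmod h * (Cmod L * Cmod h) + Rabs M * Cmod h ^ 3) in H5 by ring.
  lra.
Qed.

Definition pP (a : R) (m n : Z) : C := (IZR m, PI / a * (/ 2 + IZR n)).
Definition u0 (a : R) (m n : Z) : C := ((fst (pP a m n) - IZR m)%R, snd (pP a m n)).
Definition L0 (a : R) (m n : Z) : C := Dp a (u0 a m n).
Definition E0 (a : R) (m n : Z) : C := cexp (RtoC a * u0 a m n).

Lemma pole_cos a n : 0 < a -> cos (a * (PI / a * (/ 2 + IZR n))) = 0.
Proof.
  intros Ha. replace (a * (PI / a * (/ 2 + IZR n))) with (PI / 2 + IZR n * PI) by (field; lra).
  rewrite cos_plus, cos_PI2, sin_PI2, sin_eq_0_1 by (exists n; auto). ring.
Qed.

Lemma E0_neg a m n : 0 < a -> cexp (- (RtoC a * u0 a m n)) = (- E0 a m n)%C.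
Proof.
  intros Ha. unfold E0, u0, pP. rewrite ra_mul. cbn [fst snd].
  unfold cexp. apply injective_projections; simpl.
  - rewrite cos_neg, pole_cos by auto. ring.
  - rewrite sin_neg. replace (- (a * (IZR m - IZR m))) with (a * (IZR m - IZR m)) by ring. ring.
Qed.

Lemma E0_mod a m n : Cmod (E0 a m n) = 1.
Proof.
  unfold E0, u0, pP. rewrite Cmod_cexp, ra_mul. cbn [fst snd].
  replace (a * (IZR m - IZR m)) with 0 by ring. apply exp_0.
Qed.

Lemma L0_eq a m n : 0 < a -> L0 a m n = (2 * RtoC a * E0 a m n)%C.
Proof.
  intros Ha. unfold L0, Dp. rewrite E0_neg by auto. fold (E0 a m n). ring.
Qed.

Lemma L0_mod a m n : 0 < a -> Cmod (L0 a m n) = 2 * a.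
Proof.
  intros Ha. rewrite L0_eq, !Cmod_mult, E0_mod, !Cmod_R by auto.
  rewrite !Rabs_right by lra. ring.
Qed.

Lemma pole_Dd a m n (h : C) : 0 < a ->
  (Dd a (u0 a m n + h) - L0 a m n * h)%C =
  (E0 a m n * (cexp (RtoC a * h) - cexp (- (RtoC a * h)) - 2 * (RtoC a * h)))%C.
Proof.
  intros Ha. rewrite L0_eq by auto. unfold Dd.
  replace (RtoC a * (u0 a m n + h))%C with (RtoC a * u0 a m n + RtoC a * h)%C by ring.
  replace (- (RtoC a * u0 a m n + RtoC a * h))%C with (- (RtoC a * u0 a m n) + - (RtoC a * h))%C by ring.
  rewrite !cexp_add, E0_neg by auto. fold (E0 a m n). ring.
Qed.

Lemma pole_H a m n (h : C) : 0 < a -> h <> 0%C -> a * Cmod h <= / 5 ->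
  Cmod (h * psi a (u0 a m n + h) - 2 / L0 a m n)%C <= 20 * a * Cmod h ^ 2.
Proof.
  intros Ha Hh0 Hh.
  assert (Hhp : 0 < Cmod h) by (apply (proj1 (Cmod_gt_0 h)); auto).
  set (G := Dd a (u0 a m n + h)). set (L := L0 a m n).
  set (rho := (G - L * h)%C).
  assert (Hrho : Cmod rho <= 20 * (a * Cmod h) ^ 3).
  { unfold rho, G, L. rewrite pole_Dd, Cmod_mult, E0_mod by auto.
    rewrite <- (Cmod_ra a h) by lra. rewrite Rmult_1_l. apply cS3. rewrite Cmod_ra by lra. lra. }
  assert (HL : Cmod L = 2 * a) by (apply L0_mod; auto).
  assert (HG : a * Cmod h <= Cmod G).
  { assert (Cmod (L * h)%C <= Cmod G + Cmod rho).
    { replace (L * h)%C with (G - rho)%C by (unfold rho; ring). unfold Cminus.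
      eapply Rle_trans; [apply Cmod_triangle|]. rewrite Cmod_opp. lra. }
    rewrite Cmod_mult, HL in H.
    assert (20 * (a * Cmod h) ^ 3 <= a * Cmod h).
    { replace (20 * (a * Cmod h) ^ 3) with ((a * Cmod h) * (20 * (a * Cmod h)^2)) by ring.
      assert (0 <= a * Cmod h) by nra.
      assert (20 * (a * Cmod h) ^ 2 <= 1) by nra. nra. }
    lra. }
  assert (HGp : 0 < Cmod G) by nra.
  rewrite psi_Dd. fold G.
  replace (h * (2 / G) - 2 / L)%C with ((- (2) * rho) / (G * L))%C.
  2: { unfold rho. field. split; apply Cmod_neq0; lra. }
  rewrite Cmod_div by (apply Cmod_neq0; rewrite Cmod_mult; nra).
  rewrite !Cmod_mult, Cmod_opp, Cmod_R, Rabs_right, HL by lra.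
  apply div_le. nra.
  assert (2 * Cmod rho <= 40 * a ^ 3 * Cmod h ^ 3) by (rewrite Rpow_mult_distr in Hrho; lra).
  assert (40 * a ^ 3 * Cmod h ^ 3 <= 20 * a * Cmod h ^ 2 * (Cmod G * (2 * a))).
  { replace (40 * a ^ 3 * Cmod h ^ 3) with (20 * a * Cmod h ^ 2 * (a * Cmod h * (2 * a))) by ring.
    apply Rmult_le_compat_l. pose proof (pow2_ge_0 (Cmod h)). nra.
    apply Rmult_le_compat_r; lra. }
  lra.
Qed.

Definition vk (a : R) (c : Z -> C) (m n k : Z) (w : C) : C :=
  if Z.eq_dec k m then
    (if Req_EM_T (Cmod (w - pP a m n)%C) 0 then (c m * (2 / L0 a m n))%C
     else ((w - pP a m n) * uk a c k w)%C)
  else ((w - pP a m n) * uk a c k w)%C.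

Definition Gz (a : R) (c : Z -> C) (m n : Z) (w : C) : C := Zseries (fun k => vk a c m n k w).

Lemma Cmod_eq0_eq (w p : C) : Cmod (w - p)%C = 0 -> w = p.
Proof. intros H. apply Cmod_eq_0 in H. replace w with ((w - p) + p)%C by ring. rewrite H. ring. Qed.

Lemma vk_eq a c m n k (w : C) : w <> pP a m n -> vk a c m n k w = ((w - pP a m n) * uk a c k w)%C.
Proof.
  intros H. unfold vk. destruct (Z.eq_dec k m); auto.
  destruct (Req_EM_T (Cmod (w - pP a m n)%C) 0); auto. exfalso; apply H. apply Cmod_eq0_eq; auto.
Qed.

Lemma ek_self a (m : Z) : ek a (IZR m) m = 1.
Proof. unfold ek. replace (IZR m - IZR m) with 0 by ring. rewrite Rabs_R0, Rmult_0_r, Ropp_0. apply exp_0. Qed.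

Lemma vk_bound a c N m n k (w : C) : 0 < a -> (forall k, Cmod (c k) <= N) ->
  Cmod (vk a c m n k w) <= ek a (fst w) k * (Cmod (w - pP a m n)%C * (N * Bw a w) + N * Cmod (2 / L0 a m n)%C).
Proof.
  intros Ha Hc. pose proof (N_nonneg c N Hc) as HN.
  pose proof (ek_pos a (fst w) k). pose proof (Bw_pos a w Ha).
  pose proof (Cmod_ge_0 (w - pP a m n)%C). pose proof (Cmod_ge_0 (2 / L0 a m n)%C).
  assert (Hnn : 0 <= Cmod (w - pP a m n)%C * (N * Bw a w) + N * Cmod (2 / L0 a m n)%C).
  { apply Rplus_le_le_0_compat; apply Rmult_le_pos; try apply Rmult_le_pos; lra. }
  destruct (Req_EM_T (Cmod (w - pP a m n)%C) 0) as [E|E].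
  - pose proof (Cmod_eq0_eq _ _ E) as Ew. unfold vk. rewrite E.
    destruct (Req_EM_T 0 0); [|lra].
    destruct (Z.eq_dec k m).
    + subst k. rewrite Ew. cbn [pP fst]. rewrite ek_self. rewrite Cmod_mult.
      pose proof (Hc m). pose proof (Cmod_ge_0 (c m)).
      assert (Cmod (c m) * Cmod (2 / L0 a m n)%C <= N * Cmod (2 / L0 a m n)%C) by (apply Rmult_le_compat_r; lra).
      lra.
    + rewrite Ew. replace (pP a m n - pP a m n)%C with (RtoC 0) by ring. rewrite Cmult_0_l, Cmod_0.
      apply Rmult_le_pos; [apply Rlt_le, ek_pos|]. rewrite Rmult_0_l, Rplus_0_l. apply Rmult_le_pos; lra.
  - rewrite vk_eq by (intros Ew; apply E; rewrite Ew; replace (pP a m n - pP a m n)%C with (RtoC 0) by ring; apply Cmod_0).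
    rewrite Cmod_mult. pose proof (uk_bound a c N k w Ha Hc).
    assert (Cmod (w - pP a m n)%C * Cmod (uk a c k w) <= Cmod (w - pP a m n)%C * (ek a (fst w) k * (N * Bw a w)))
      by (apply Rmult_le_compat_l; lra).
    assert (0 <= ek a (fst w) k * (N * Cmod (2 / L0 a m n)%C)) by (apply Rmult_le_pos; [lra|apply Rmult_le_pos; lra]).
    nra.
Qed.

Lemma G_conv a c N m n (w : C) : 0 < a -> (forall k, Cmod (c k) <= N) ->
  Zconv (fun k => vk a c m n k w).
Proof.
  intros Ha Hc.
  destruct (ZS_ek_scal a (fst w) (Cmod (w - pP a m n)%C * (N * Bw a w) + N * Cmod (2 / L0 a m n)%C) Ha) as [HZ _].
  exact (proj1 (Zbound _ _ (fun k => vk_bound a c N m n k w Ha Hc) HZ)).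
Qed.

Lemma G_eq a c N m n (w : C) : 0 < a -> (forall k, Cmod (c k) <= N) -> w <> pP a m n ->
  Gz a c m n w = ((w - pP a m n) * Fz a c w)%C.
Proof.
  intros Ha Hc Hw. unfold Gz, Fz.
  rewrite (Zseries_ext _ (fun k => ((w - pP a m n) * uk a c k w)%C)) by (intros; apply vk_eq; auto).
  apply Zseries_scal. apply (F_conv a c N); auto.
Qed.

Definition dG (a : R) (c : Z -> C) (m n k : Z) : C :=
  if Z.eq_dec k m then RtoC 0 else (c k * psi a ((fst (pP a m n) - IZR k)%R, snd (pP a m n)))%C.

Definition rp (a : R) : R :=
  Rmin (Rmin (/ a) ((1 - exp (- a)) / (24 * a))) (/ (5 * a)).

Lemma rp_pos a : 0 < a -> 0 < rp a.
Proof.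
  intros Ha. pose proof (q_bounds a Ha). unfold rp.
  apply Rmin_pos; [apply Rmin_pos|].
  apply Rinv_0_lt_compat; auto. apply Rdiv_lt_0_compat; lra. apply Rinv_0_lt_compat; lra.
Qed.

Lemma G_QR_p a c N m n : 0 < a -> (forall k, Cmod (c k) <= N) ->
  hasQR (Gz a c m n) (pP a m n) (Zseries (dG a c m n)).
Proof.
  intros Ha Hc. pose proof (N_nonneg c N Hc) as HN. pose proof (q_bounds a Ha) as Hq.
  set (p := pP a m n).
  set (m0 := 1 - exp (- a)).
  assert (Hm0 : 0 < m0) by (unfold m0; lra).
  set (r := rp a). assert (Hr : 0 < r) by apply rp_pos, Ha.
  assert (Hr1 : r <= Rmin (/ a) (m0 / (24 * a))) by apply Rmin_l.
  assert (Hr2 : r <= / (5 * a)) by apply Rmin_r.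
  set (K := N * (4 * a / m0 ^ 2 + 176 * a ^ 2 / m0 ^ 3 * r + 20 * a)).
  assert (HK1 : 0 <= 4 * a / m0 ^ 2) by (apply Rlt_le, Rdiv_lt_0_compat; [lra|apply pow_lt; lra]).
  assert (HK2 : 0 <= 176 * a ^ 2 / m0 ^ 3) by (apply Rlt_le, Rdiv_lt_0_compat; [pose proof (pow_lt a 2 Ha); lra|apply pow_lt; lra]).
  exists r. split; auto. exists (2 * ZsumR (fun k => ek a (fst p) k * K)).
  intros h Hh. unfold Gz.
  apply (SQR (vk a c m n) (dG a c m n) p r (fun k => ek a (fst p) k * K)); auto.
  - apply ZS_ek_scal; auto.
  - intros h' _. apply (G_conv a c N); auto.
  - apply (G_conv a c N); auto.
  - destruct (ZS_ek_scal a (fst p) (N * (2 / (1 - exp (- a)))) Ha) as [HZ _].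
    refine (proj1 (Zbound _ _ _ HZ)). intros k. unfold dG.
    pose proof (ek_pos a (fst p) k).
    assert (0 <= 2 / (1 - exp (- a))) by (apply Rlt_le, Rdiv_lt_0_compat; lra).
    destruct (Z.eq_dec k m).
    + rewrite Cmod_0. apply Rmult_le_pos; [lra|]. apply Rmult_le_pos; lra.
    + rewrite Cmod_mult. pose proof (int_sep m k (not_eq_sym n0)).
      pose proof (psi_far a (fst p - IZR k) (snd p) Ha ltac:(unfold p; cbn [pP fst]; lra)).
      unfold ek. pose proof (Hc k). pose proof (Cmod_ge_0 (c k)).
      replace (exp (- (a * Rabs (fst p - IZR k))) * (N * (2 / (1 - exp (- a))))) with
        (N * (2 / (1 - exp (- a)) * exp (- (a * Rabs (fst p - IZR k))))) by ring.
      apply Rmult_le_compat; auto. apply Cmod_ge_0.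
  - intros k h' Hh'.
    assert (Hah : a * Cmod h' <= / 5).
    { assert (Cmod h' <= / (5 * a)) by lra.
      apply (Rmult_le_compat_l a) in H; [|lra]. replace (a * / (5 * a)) with (/ 5) in H by (field; lra). lra. }
    assert (HKk : 0 <= ek a (fst p) k * K) by (apply Rmult_le_pos; [apply Rlt_le, ek_pos|unfold K; apply Rmult_le_pos; [lra|]; pose proof (pow2_ge_0 a); nra]).
    unfold dG, vk. fold p.
    destruct (Z.eq_dec k m) as [Ek|Ek].
    + subst k. rewrite Cmult_0_l.
      replace (p - p)%C with (RtoC 0) by ring. rewrite Cmod_0. destruct (Req_EM_T 0 0); [|lra].
      replace (p + h' - p)%C with h' by ring.
      destruct (Req_EM_T (Cmod h') 0) as [E0h|E0h].
      * replace (c m * (2 / L0 a m n) - c m * (2 / L0 a m n) - 0)%C with (RtoC 0) by ring.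
        rewrite Cmod_0. apply Rmult_le_pos; [auto|apply pow2_ge_0].
      * assert (Hh0 : h' <> RtoC 0) by (intros E; apply E0h; rewrite E; apply Cmod_0).
        unfold uk. rewrite shift_eq. fold p.
        replace (h' * (c m * psi a (((fst p - IZR m)%R, snd p) + h')) - c m * (2 / L0 a m n) - 0)%C with
          (c m * (h' * psi a (u0 a m n + h') - 2 / L0 a m n))%C by (unfold u0; fold p; ring).
        rewrite Cmod_mult. pose proof (pole_H a m n h' Ha Hh0 Hah).
        unfold p; cbn [pP fst]; rewrite ek_self, Rmult_1_l.
        pose proof (Hc m). pose proof (Cmod_ge_0 (c m)).
        apply Rle_trans with (N * (20 * a * Cmod h' ^ 2)).
        { apply Rmult_le_compat; auto. apply Cmod_ge_0. }
        unfold K. pose proof (pow2_ge_0 (Cmod h')).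
        assert (0 <= 4 * a / m0 ^ 2 + 176 * a ^ 2 / m0 ^ 3 * r) by (pose proof (Rmult_le_pos _ _ HK2 (Rlt_le _ _ Hr)); lra).
        assert (0 <= N * ((4 * a / m0 ^ 2 + 176 * a ^ 2 / m0 ^ 3 * r) * Cmod h' ^ 2)) by (apply Rmult_le_pos; auto; apply Rmult_le_pos; auto).
        nra.
    + replace (p - p)%C with (RtoC 0) by ring. replace (p + h' - p)%C with h' by ring.
      unfold uk. rewrite shift_eq. fold p.
      set (uk0 := ((fst p - IZR k)%R, snd p)).
      replace (h' * (c k * psi a (uk0 + h')) - 0 * (c k * psi a uk0) - c k * psi a uk0 * h')%C with
        (c k * h' * (psi a (uk0 + h') - psi a uk0))%C by ring.
      assert (Hlb : m0 * exp (a * Rabs (fst uk0)) <= Cmod (Dd a uk0)).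
      { unfold uk0. cbn [fst]. rewrite Rmult_comm. apply Dd_lb_far; auto.
        pose proof (int_sep m k (not_eq_sym Ek)). unfold p; cbn [pP fst]. lra. }
      destruct (psi_QR a m0 uk0 h' Ha Hm0 Hlb ltac:(lra)) as [HQ _].
      pose proof (dpsi_bound a m0 uk0 Ha Hm0 Hlb) as HD.
      set (e := exp (- (a * Rabs (fst uk0)))) in *.
      assert (He : ek a (fst p) k = e) by reflexivity.
      rewrite He.
      assert (Hdiff : Cmod (psi a (uk0 + h') - psi a uk0)%C <= (4 * a / m0 ^ 2 + 176 * a ^ 2 / m0 ^ 3 * r) * e * Cmod h').
      { replace (psi a (uk0 + h') - psi a uk0)%C with (dpsi a uk0 * h' + (psi a (uk0 + h') - psi a uk0 - dpsi a uk0 * h'))%C by ring.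
        eapply Rle_trans; [apply Cmod_triangle|]. rewrite Cmod_mult.
        pose proof (Cmod_ge_0 h'). pose proof (exp_pos (- (a * Rabs (fst uk0)))). fold e in H0.
        assert (Cmod (dpsi a uk0) * Cmod h' <= 4 * a / m0 ^ 2 * e * Cmod h') by (apply Rmult_le_compat_r; auto).
        assert (176 * a ^ 2 / m0 ^ 3 * e * Cmod h' ^ 2 <= 176 * a ^ 2 / m0 ^ 3 * r * e * Cmod h').
        { replace (176 * a ^ 2 / m0 ^ 3 * e * Cmod h' ^ 2) with ((176 * a ^ 2 / m0 ^ 3 * e * Cmod h') * Cmod h') by ring.
          replace (176 * a ^ 2 / m0 ^ 3 * r * e * Cmod h') with ((176 * a ^ 2 / m0 ^ 3 * e * Cmod h') * r) by ring.
          apply Rmult_le_compat_l. apply Rmult_le_pos; [apply Rmult_le_pos; lra|lra]. lra. }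
        lra. }
      rewrite !Cmod_mult. pose proof (Hc k). pose proof (Cmod_ge_0 (c k)). pose proof (Cmod_ge_0 h').
      pose proof (Cmod_ge_0 (psi a (uk0 + h') - psi a uk0)%C).
      apply Rle_trans with (N * Cmod h' * ((4 * a / m0 ^ 2 + 176 * a ^ 2 / m0 ^ 3 * r) * e * Cmod h')).
      { apply Rmult_le_compat; auto. apply Rmult_le_pos; auto. apply Rmult_le_compat_r; auto. }
      unfold K. pose proof (exp_pos (- (a * Rabs (fst uk0)))). fold e in H3.
      assert (0 <= N * e * 20 * a * Cmod h' ^ 2) by (repeat apply Rmult_le_pos; try lra; apply pow2_ge_0).
      replace (e * (N * (4 * a / m0 ^ 2 + 176 * a ^ 2 / m0 ^ 3 * r + 20 * a)) * Cmod h' ^ 2) with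
        (N * Cmod h' * ((4 * a / m0 ^ 2 + 176 * a ^ 2 / m0 ^ 3 * r) * e * Cmod h') + N * e * 20 * a * Cmod h' ^ 2) by ring.
      lra.
Qed.

Lemma pP_in a m n : in_P a (pP a m n).
Proof. exists m, n. reflexivity. Qed.

Definition rsep (a : R) : R := Rmin (/ 2) (PI / (2 * a)).

Lemma G_QR_w a c N m n (w : C) : 0 < a -> (forall k, Cmod (c k) <= N) ->
  w <> pP a m n -> Cmod (w - pP a m n)%C < rsep a ->
  exists L, hasQR (Gz a c m n) w L.
Proof.
  intros Ha Hc Hw Hd.
  assert (HP : ~ in_P a w).
  { intros HwP. apply Hw. apply (P_sep a w (pP a m n) Ha HwP (pP_in a m n)).
    pose proof (Rmin_l (/ 2) (PI / (2 * a))). unfold rsep in Hd. lra.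
    pose proof (Rmin_r (/ 2) (PI / (2 * a))). unfold rsep in Hd. lra. }
  destruct (F_hasQR a c N w Ha Hc HP) as [r [Hr [M HM]]].
  eexists. apply (QR_prod (Fz a c) (Gz a c m n) w (pP a m n) (Zseries (fun k : Z => (c k * dpsi a ((fst w - IZR k)%R, snd w))%C)) r M (Cmod (w - pP a m n)%C)); auto.
  - apply (proj1 (Cmod_gt_0 _)). intros E. apply Hw. replace w with ((w - pP a m n) + pP a m n)%C by ring. rewrite E. ring.
  - intros h Hh. apply (G_eq a c N); auto. intros E.
    assert (Cmod h = Cmod (w - pP a m n)%C).
    { replace h with (- (w - pP a m n))%C. apply Cmod_opp.
      replace (w - pP a m n)%C with (w + h - pP a m n - h)%C by ring. rewrite E. ring. }
    lra.
  - apply (G_eq a c N); auto.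
Qed.

Lemma simple_pole a c N p : 0 < a -> (forall k, Cmod (c k) <= N) -> in_P a p ->
  at_most_simple_pole (Fz a c) p.
Proof.
  intros Ha Hc [m [n Ep]].
  assert (Ep' : p = pP a m n) by exact Ep. clear Ep. subst p.
  assert (Hrs : 0 < rsep a).
  { unfold rsep. apply Rmin_pos. lra. apply Rdiv_lt_0_compat. apply PI_RGT_0. lra. }
  exists (rsep a). split; auto. exists (Gz a c m n). split.
  - intros w Hw. destruct (Req_EM_T (Cmod (w - pP a m n)%C) 0) as [E|E].
    + apply Cmod_eq0_eq in E. subst w. eapply hasQR_derive. apply (G_QR_p a c N); auto.
    + assert (w <> pP a m n) by (intros Ew; apply E; rewrite Ew; replace (pP a m n - pP a m n)%C with (RtoC 0) by ring; apply Cmod_0).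
      destruct (G_QR_w a c N m n w Ha Hc H Hw) as [L HL]. eapply hasQR_derive; eauto.
  - intros w [Hw1 Hw2].
    assert (Hne : (w - pP a m n)%C <> RtoC 0) by (apply Cmod_neq0; auto).
    assert (w <> pP a m n) by (intros Ew; apply Hne; rewrite Ew; ring).
    rewrite (G_eq a c N) by auto. field. auto.
Qed.

Lemma linf_bound (c : Z -> C) : bounded_seq c -> forall k, Cmod (c k) <= linf_norm c.
Proof.
  intros [M HM] k. unfold linf_norm.
  set (Es := fun r => exists k, r = Cmod (c k)).
  destruct (Lub_Rbar_correct Es) as [Hub Hlub].
  assert (Hk : Es (Cmod (c k))) by (exists k; auto).
  destruct (Lub_Rbar Es) as [l| |] eqn:El.
  - simpl. specialize (Hub _ Hk). simpl in Hub. auto.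
  - exfalso. assert (is_ub_Rbar Es M) by (intros r [j Hj]; subst; simpl; auto).
    specialize (Hlub _ H). simpl in Hlub. auto.
  - exfalso. specialize (Hub _ Hk). simpl in Hub. auto.
Qed.

Lemma sinh_ge x : 0 <= x -> 2 * x <= exp x - exp (- x).
Proof.
  intros Hx.
  destruct (mvt0 (fun t => exp t - exp (- t) - 2 * t) (fun t => exp t + exp (- t) - 2) x) as [c [Hc H]].
  { intros t. auto_derive; auto. ring. }
  rewrite exp_0, Ropp_0, exp_0 in H.
  pose proof (exp_ineq1_le c). pose proof (exp_ineq1_le (- c)).
  assert (0 <= (exp c + exp (- c) - 2) * (x - 0)) by (apply Rmult_le_pos; lra).
  lra.
Qed.

Lemma jordan v : 0 <= v <= PI / 2 -> 2 * v / PI <= sin v.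
Proof.
  intros [H0 H1]. pose proof PI2_3_2 as P1. pose proof PI_4 as P2.
  assert (HP : 0 < PI) by lra.
  destruct (Rle_dec v (6/5)).
  - destruct (sin_bound v 0 H0 ltac:(lra)) as [S1 _].
    unfold sin_approx, sin_term in S1. simpl in S1.
    assert (2 * v / PI <= v - v^3/6).
    { apply div_le; auto.
      assert (v^2 <= 36/25) by nra.
      replace ((v - v^3/6) * PI) with (v * (PI * (1 - v^2/6))) by (simpl; field).
      assert (PI * (1 - v^2/6) >= 2) by nra. nra. }
    assert (v - v ^ 3 / 6 <= sin v) by (simpl; lra). lra.
  - set (w := PI / 2 - v).
    assert (Hw : 0 <= w <= 4/5) by (unfold w; lra).
    rewrite <- (cos_shift v). fold w.
    destruct (cos_bound w 0 ltac:(lra) ltac:(lra)) as [C1 _].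
    unfold cos_approx, cos_term in C1. simpl in C1.
    assert (1 - w^2/2 <= cos w) by (simpl; lra).
    assert (2 * v / PI = 1 - 2 * w / PI) by (unfold w; field; lra).
    assert (w^2/2 <= 2 * w / PI).
    { apply le_div; auto. nra. }
    lra.
Qed.

Lemma abs_sin_ge b : Rabs b <= / 2 -> 2 * Rabs b <= Rabs (sin (PI * b)).
Proof.
  intros Hb. pose proof PI_RGT_0. assert (Hb2 : - / 2 <= b <= / 2) by (apply Rabs_le_between; auto).
  assert (Hv : 0 <= PI * Rabs b <= PI / 2) by (split; [apply Rmult_le_pos; [lra|apply Rabs_pos]|nra]).
  pose proof (jordan _ Hv).
  assert (Rabs (sin (PI * b)) = sin (PI * Rabs b)).
  { unfold Rabs at 2. destruct (Rcase_abs b).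
    - replace (PI * - b) with (- (PI * b)) by ring. rewrite sin_neg.
      assert (sin (PI * - b) >= 0).
      { apply Rle_ge, sin_ge_0; nra. }
      replace (PI * - b) with (- (PI * b)) in H1 by ring. rewrite sin_neg in H1.
      rewrite Rabs_left1; lra.
    - rewrite Rabs_right; auto. apply Rle_ge, sin_ge_0; nra. }
  rewrite H1. replace (2 * Rabs b) with (2 * (PI * Rabs b) / PI) by (field; lra). auto.
Qed.

Lemma cos_brk a y : 0 < a ->
  Rabs (cos (a * y)) = Rabs (sin (PI * brk (a * y / PI - / 2))).
Proof.
  intros Ha. pose proof PI_RGT_0.
  unfold brk. set (I := Int_part (a * y / PI - / 2 + / 2)).
  replace (a * y) with ((PI / 2 - (- (PI * (a * y / PI - / 2 - IZR I)))) + IZR I * PI) at 1 by (field; lra).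
  rewrite cos_plus, cos_shift, (sin_eq_0_1 (IZR I * PI)) by (exists I; auto).
  rewrite Rmult_0_r, Rminus_0_r, Rabs_mult.
  assert (Rabs (cos (IZR I * PI)) = 1).
  { pose proof (sin2_cos2 (IZR I * PI)). rewrite (sin_eq_0_1 (IZR I * PI)) in H0 by (exists I; auto).
    unfold Rsqr in H0. assert (cos (IZR I * PI) * cos (IZR I * PI) = 1) by lra.
    assert (Rabs (cos (IZR I * PI)) * Rabs (cos (IZR I * PI)) = 1) by (rewrite <- Rabs_mult, H1; apply Rabs_R1).
    pose proof (Rabs_pos (cos (IZR I * PI))). nra. }
  rewrite H0, Rmult_1_r. rewrite sin_neg, Rabs_Ropp. reflexivity.
Qed.

Lemma psi_le_inv a b y : 0 < a -> Cmod (psi a (b, y)) <= 2 / Cmod (Dd a (b, y)).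
Proof.
  intros Ha. destruct (Req_EM_T (Cmod (Dd a (b,y))) 0) as [E|E].
  - rewrite psi_zero. rewrite Cmod_0, E. unfold Rdiv. rewrite Rinv_0. lra. apply Cmod_eq_0; auto.
  - rewrite psi_mod. lra. pose proof (Cmod_ge_0 (Dd a (b,y))). lra.
Qed.

Lemma bound2 a b y : 0 < a -> a * b <> 0 -> Cmod (psi a (b, y)) <= / Rabs (a * b).
Proof.
  intros Ha Hab. destruct (Req_EM_T (Cmod (Dd a (b,y))) 0) as [E|E].
  - rewrite psi_zero. rewrite Cmod_0. left. apply Rinv_0_lt_compat, Rabs_pos_lt; auto. apply Cmod_eq_0; auto.
  - rewrite psi_mod by (pose proof (Cmod_ge_0 (Dd a (b,y))); lra).
    pose proof (Dd_lb1 a b y). rewrite sinh_abs in H.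
    pose proof (sinh_ge (Rabs (a * b)) (Rabs_pos _)).
    assert (0 < Rabs (a * b)) by (apply Rabs_pos_lt; auto).
    apply div_le. pose proof (Cmod_ge_0 (Dd a (b,y))). lra.
    rewrite Rmult_comm. apply le_div. auto. lra.
Qed.

Lemma bound3 a b y : 0 < a -> 2 * brk (a * y / PI - / 2) <> 0 ->
  Cmod (psi a (b, y)) <= / Rabs (2 * brk (a * y / PI - / 2)).
Proof.
  intros Ha Hb. set (be := brk (a * y / PI - / 2)) in *.
  assert (Hbp : 0 < Rabs (2 * be)) by (apply Rabs_pos_lt; auto).
  destruct (Req_EM_T (Cmod (Dd a (b,y))) 0) as [E|E].
  - rewrite psi_zero. rewrite Cmod_0. left. apply Rinv_0_lt_compat; auto. apply Cmod_eq_0; auto.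
  - rewrite psi_mod by (pose proof (Cmod_ge_0 (Dd a (b,y))); lra).
    pose proof (Dd_lb2 a b y). rewrite cos_brk in H by auto. fold be in H.
    pose proof (brk_range (a * y / PI - / 2)). fold be in H0.
    assert (Rabs be <= / 2) by (apply Rabs_le; lra).
    pose proof (abs_sin_ge be H1).
    rewrite Rabs_mult, (Rabs_right 2) in * by lra.
    apply div_le. pose proof (Cmod_ge_0 (Dd a (b,y))). lra.
    rewrite Rmult_comm. apply le_div. auto. lra.
Qed.

Theorem lemma4p4 (a : R) (ha : 0 < a) :
  exists K : R, 0 < K /\
  forall c : Z -> C, bounded_seq c ->
  exists F : C -> C,
    (forall x : R, F (RtoC x) = f_of a c x) /\
    (forall z : C, ~ in_P a z -> cdiff F z) /\
    (forall p : C, in_P a p -> at_most_simple_pole F p) /\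
    (forall x y : R, ~ in_P a (x, y) ->
       Cmod (F (x, y)) <= K * linf_norm c * Cmod (psi a (brk x, y)) /\
       (a * brk x <> 0 ->
          K * linf_norm c * Cmod (psi a (brk x, y)) <= K * linf_norm c * / Rabs (a * brk x)) /\
       (2 * brk (a * y / PI - / 2) <> 0 ->
          K * linf_norm c * Cmod (psi a (brk x, y))
            <= K * linf_norm c * / Rabs (2 * brk (a * y / PI - / 2)))).
Proof.
  pose proof (q_bounds a ha) as Hq.
  set (K := 2 * (2 / (1 - exp (- a)) + 1) * exp (a / 2) * (4 / (1 - exp (- a)))).
  assert (H2q : 0 < 2 / (1 - exp (- a))) by (apply Rdiv_lt_0_compat; lra).
  assert (H4q : 0 < 4 / (1 - exp (- a))) by (apply Rdiv_lt_0_compat; lra).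
  assert (HK : 0 < K).
  { unfold K. pose proof (exp_pos (a / 2)). repeat apply Rmult_lt_0_compat; lra. }
  exists K. split; auto.
  intros c Hcb. pose proof (linf_bound c Hcb) as Hc. set (N := linf_norm c) in *.
  pose proof (N_nonneg c N Hc) as HN.
  exists (Fz a c). split; [|split; [|split]].
  - intros x. reflexivity.
  - intros z Hz. eapply hasQR_derive. apply (F_hasQR a c N); auto.
  - intros p Hp. apply (simple_pole a c N); auto.
  - intros x y Hxy.
    assert (HKN : 0 <= K * N) by (apply Rmult_le_pos; lra).
    split; [|split].
    + destruct (F_conv a c N (x, y) ha Hc) as [_ Hb]. unfold Bw in Hb. cbn [fst snd] in Hb.
      set (P0 := Cmod (psi a (brk x, y))) in *.
      assert (HD : Dd a (brk x, y) <> 0%C) by (intros E; apply Hxy; apply Dd_zero_P; auto).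
      assert (Hbr : Rabs (brk x) <= / 2) by (pose proof (brk_range x); apply Rabs_le; lra).
      pose proof (psi_lb a (brk x) y ha HD Hbr) as Hlb. fold P0 in Hlb.
      assert (He : 1 <= exp (a / 2) * P0).
      { pose proof (exp_abs_inv (a / 2)). pose proof (exp_pos (a / 2)).
        assert (exp (a / 2) * exp (- (a / 2)) <= exp (a / 2) * P0) by (apply Rmult_le_compat_l; lra). lra. }
      assert (HB : 2 / (1 - exp (- a)) + exp (a / 2) * P0 <= (2 / (1 - exp (- a)) + 1) * exp (a / 2) * P0).
      { assert (2 / (1 - exp (- a)) * 1 <= 2 / (1 - exp (- a)) * (exp (a / 2) * P0)) by (apply Rmult_le_compat_l; lra).
        lra. }
      eapply Rle_trans; [exact Hb|].
      assert (0 <= 2 / (1 - exp (- a)) + exp (a / 2) * P0) by lra.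
      assert (N * (2 / (1 - exp (- a)) + exp (a / 2) * P0) <= N * ((2 / (1 - exp (- a)) + 1) * exp (a / 2) * P0))
        by (apply Rmult_le_compat_l; lra).
      unfold K.
      replace (2 * (2 / (1 - exp (- a)) + 1) * exp (a / 2) * (4 / (1 - exp (- a))) * N * P0) with
        (2 * (N * ((2 / (1 - exp (- a)) + 1) * exp (a / 2) * P0)) * (4 / (1 - exp (- a)))) by ring.
      apply Rmult_le_compat_r; lra.
    + intros Hab. apply Rmult_le_compat_l; auto. apply bound2; auto.
    + intros Hb. apply Rmult_le_compat_l; auto. apply bound3; auto.
Qed.
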